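(* Every latent information prior (i.e. every Borel probability measure $\pi$ on $[0,1]$ maximizing $I(\pi)$ over all Borel probability measures on $[0,1]$) is a discrete distribution whose support consists of at most four points.
   Context: Bernoulli model: for $\theta\in[0,1]$, $p_\theta(x)=\theta^x(1-\theta)^{1-x}$, $x\in\{0,1\}$. One observes $x\sim p_\theta$ and predicts an independent future $y\sim p_\theta$. A nonrandomized decision is a pair $\delta=(\delta_0,\delta_1)\in\mathcal D=[0,1]^2$, used as the predictive distribution $p_\delta(y\mid x)=\delta_x^{\,y}(1-\delta_x)^{1-y}$. The Kullback–Leibler risk is $R_\delta(\theta)=-S(\theta)+\theta^2\log\frac1{\delta_1}+\theta(1-\theta)\log\frac1{1-\delta_1}+\theta(1-\theta)\log\frac1{\delta_0}+(1-\theta)^2\log\frac1{1-\delta_0}\in[0,+\infty]$, where $S(\theta)=-\theta\log\theta-(1-\theta)\log(1-\theta)$ is the binary entropy, with conventions $0\log 0=0$, $\log(1/0)=+\infty$, $0\cdot(+\infty)=0$. A prior is a Borel probability measure $\pi$ on $[0,1]$. The conditional mutual information of $\theta$ and $y$ given $x$ under $\pi$ is $I(\pi)=\min_{\delta\in\mathcal D}\int_{[0,1]}R_\delta(\theta)\,\pi(d\theta)$, i.e. the Bayes risk of the Bayesian predictive distribution $p_\pi(y\mid x)=\int p_\theta(y)p_\theta(x)\pi(d\theta)/\int p_\theta(x)\pi(d\theta)$. A latent information prior is a prior maximizing $I$ over all priors. *)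

(* Defs.v *)
From Stdlib Require Import Reals Lra ClassicalEpsilon.
Open Scope R_scope.

Inductive ereal : Type := Fin (r : R) | PInf.

Definition ele (x y : ereal) : Prop :=
  match x, y with
  | Fin a, Fin b => a <= b
  | _, PInf => True
  | PInf, Fin _ => False
  end.

Definition eadd (x y : ereal) : ereal :=
  match x, y with
  | Fin a, Fin b => Fin (a + b)
  | _, _ => PInf
  end.

Definition is_esup (P : ereal -> Prop) (v : ereal) : Prop :=
  (forall x, P x -> ele x v) /\ (forall u, (forall x, P x -> ele x u) -> ele v u).
Definition is_einf (P : ereal -> Prop) (v : ereal) : Prop :=
  (forall x, P x -> ele v x) /\ (forall u, (forall x, P x -> ele u x) -> ele u v).

Definition esup (P : ereal -> Prop) : ereal :=
  epsilon (inhabits PInf) (is_esup P).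
Definition einf (P : ereal -> Prop) : ereal :=
  epsilon (inhabits PInf) (is_einf P).

Definition is_sigma_algebra (F : (R -> Prop) -> Prop) : Prop :=
  F (fun _ => True) /\
  (forall A, F A -> F (fun x => ~ A x)) /\
  (forall A : nat -> (R -> Prop), (forall n, F (A n)) -> F (fun x => exists n, A n x)).

Definition borel (A : R -> Prop) : Prop :=
  forall F, is_sigma_algebra F -> (forall a b, F (fun x => a < x < b)) -> F A.

Definition unit_interval (x : R) : Prop := 0 <= x <= 1.

(** * Borel probability measures on [0,1]
    (represented as Borel probability measures on R giving full mass to [0,1]) *)
Definition prior (mu : (R -> Prop) -> R) : Prop :=
  (forall A, borel A -> 0 <= mu A) /\
  mu (fun _ => True) = 1 /\
  mu unit_interval = 1 /\
  (forall A : nat -> (R -> Prop),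
      (forall n, borel (A n)) ->
      (forall m n x, m <> n -> A m x -> A n x -> False) ->
      infinite_sum (fun n => mu (A n)) (mu (fun x => exists n, A n x))).

(** * Integral over [0,1] of a nonnegative extended-valued function:
    supremum of  sum_i mu(A_i) c_i  over finite families of pairwise disjoint
    Borel sets A_i in [0,1] and constants 0 <= c_i <= f on A_i
    (i.e. over nonnegative simple functions below f). *)
Fixpoint rsum (f : nat -> R) (n : nat) : R :=
  match n with O => 0 | S k => rsum f k + f k end.

Definition lower_sum (mu : (R -> Prop) -> R) (f : R -> ereal) (v : R) : Prop :=
  exists (n : nat) (A : nat -> (R -> Prop)) (c : nat -> R),
    (forall i, (i < n)%nat -> borel (A i)) /\
    (forall i x, (i < n)%nat -> A i x -> unit_interval x) /\
    (forall i j x, (i < n)%nat -> (j < n)%nat -> i <> j -> A i x -> A j x -> False) /\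
    (forall i, (i < n)%nat -> 0 <= c i) /\
    (forall i x, (i < n)%nat -> A i x -> ele (Fin (c i)) (f x)) /\
    v = rsum (fun i => mu (A i) * c i) n.

Definition integral (mu : (R -> Prop) -> R) (f : R -> ereal) : ereal :=
  esup (fun e => exists v, lower_sum mu f v /\ e = Fin v).

(** * Kullback-Leibler risk of the decision delta = (d0, d1) *)
Definition xlogx (x : R) : R := if Req_EM_T x 0 then 0 else x * ln x.

Definition S (t : R) : R := - xlogx t - xlogx (1 - t).

Definition clog (c d : R) : ereal :=
  if Req_EM_T c 0 then Fin 0
  else if Req_EM_T d 0 then PInf
  else Fin (c * ln (1 / d)).

Definition risk (d0 d1 : R) (t : R) : ereal :=
  eadd (Fin (- S t))
   (eadd (clog (t ^ 2) d1)
    (eadd (clog (t * (1 - t)) (1 - d1))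
     (eadd (clog (t * (1 - t)) d0)
           (clog ((1 - t) ^ 2) (1 - d0))))).

(** * Conditional mutual information I(pi): minimum Bayes risk over D = [0,1]^2 *)
Definition I (mu : (R -> Prop) -> R) : ereal :=
  einf (fun e => exists d0 d1, unit_interval d0 /\ unit_interval d1 /\
                               e = integral mu (risk d0 d1)).

Definition latent_information_prior (mu : (R -> Prop) -> R) : Prop :=
  prior mu /\ forall nu, prior nu -> ele (I nu) (I mu).

(* Main.v *)
Require Import Defs.
From Stdlib Require Import ZArith Reals Lra Lia Ranalysis Rtopology ClassicalEpsilon
  PropExtensionality FunctionalExtensionality Classical.
Open Scope R_scope.


Lemma ele_refl x : ele x x.
Proof. destruct x; simpl; auto; lra. Qed.
Lemma ele_trans x y z : ele x y -> ele y z -> ele x z.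
Proof. destruct x, y, z; simpl; auto; try lra; tauto. Qed.
Lemma ele_antisym x y : ele x y -> ele y x -> x = y.
Proof. destruct x, y; simpl; try tauto; intros; f_equal; lra. Qed.

Lemma einf_exists (P : ereal -> Prop) :
  (exists x, P x) -> (forall x, P x -> ele (Fin 0) x) -> exists v, is_einf P v.
Proof.
  intros [x0 Hx0] Hlb.
  destruct (classic (exists r, P (Fin r))) as [[r0 Hr0]|Hno].
  - set (E := fun y => P (Fin (- y))).
    assert (Hb : bound E). { exists 0. intros y Hy. specialize (Hlb _ Hy). simpl in Hlb. lra. }
    assert (He : exists y, E y). { exists (- r0). unfold E. rewrite Ropp_involutive. auto. }
    destruct (completeness E Hb He) as [m [Hm1 Hm2]].
    exists (Fin (- m)). split.
    + intros [r|] Hr; simpl; auto.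
      assert (E (- r)) by (unfold E; rewrite Ropp_involutive; auto).
      specialize (Hm1 _ H). lra.
    + intros [u|] Hu; simpl.
      * assert (m <= - u). { apply Hm2. intros y Hy. specialize (Hu _ Hy). simpl in Hu. lra. }
        lra.
      * specialize (Hu _ Hr0). simpl in Hu. auto.
  - exists PInf. split.
    + intros [r|] Hr; simpl; auto. exfalso; apply Hno; eauto.
    + intros [u|] Hu; simpl; auto.
Qed.

Lemma einf_spec P : (exists x, P x) -> (forall x, P x -> ele (Fin 0) x) -> is_einf P (einf P).
Proof.
  intros H1 H2. unfold einf. apply epsilon_spec. apply einf_exists; auto.
Qed.

Lemma esup_exists (P : ereal -> Prop) : (exists x, P x) -> exists v, is_esup P v.
Proof.
  intros [x0 Hx0].
  destruct (classic (P PInf)) as [HP|HP].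
  { exists PInf. split. intros x _; destruct x; simpl; auto.
    intros u Hu. apply Hu; auto. }
  destruct x0 as [r0|]; [|contradiction].
  set (E := fun y => P (Fin y)).
  destruct (classic (bound E)) as [Hb|Hb].
  - destruct (completeness E Hb (ex_intro _ r0 Hx0)) as [m [Hm1 Hm2]].
    exists (Fin m). split.
    + intros [r|] Hr; simpl; [apply Hm1; auto | contradiction].
    + intros [u|] Hu; simpl; auto. apply Hm2. intros y Hy. apply (Hu (Fin y)); auto.
  - exists PInf. split.
    + intros x _; destruct x; simpl; auto.
    + intros [u|] Hu; simpl; auto. apply Hb. exists u. intros y Hy. apply (Hu (Fin y)); auto.
Qed.

Lemma esup_spec P : (exists x, P x) -> is_esup P (esup P).
Proof. intros H. unfold esup. apply epsilon_spec. apply esup_exists; auto. Qed.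

Lemma borel_ext A B : (forall x, A x <-> B x) -> borel A -> borel B.
Proof.
  intros H HA. replace B with A; auto.
  apply functional_extensionality; intro x; apply propositional_extensionality; auto.
Qed.

Lemma borel_interval a b : borel (fun x => a < x < b).
Proof. intros F _ H; apply H. Qed.
Lemma borel_T : borel (fun _ => True).
Proof. intros F [H _] _; exact H. Qed.
Lemma borel_compl A : borel A -> borel (fun x => ~ A x).
Proof. intros HA F HF Hi. destruct HF as [h1 [h2 h3]]. apply h2, HA; [split;[|split]|]; auto. Qed.
Lemma borel_cunion (A : nat -> R -> Prop) : (forall n, borel (A n)) -> borel (fun x => exists n, A n x).
Proof. intros HA F HF Hi. pose proof HF as [h1 [h2 h3]]. apply h3. intro n; apply HA; auto. Qed.
Lemma borel_union A B : borel A -> borel B -> borel (fun x => A x \/ B x).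
Proof.
  intros HA HB. apply borel_ext with (fun x => exists n:nat, (if Nat.eqb n 0 then A else B) x).
  - intro x; split.
    + intros [n Hn]; destruct (Nat.eqb n 0); auto.
    + intros [H|H]; [exists 0%nat | exists 1%nat]; auto.
  - apply borel_cunion. intro n; destruct (Nat.eqb n 0); auto.
Qed.
Lemma borel_inter A B : borel A -> borel B -> borel (fun x => A x /\ B x).
Proof.
  intros HA HB. apply borel_ext with (fun x => ~ (~ A x \/ ~ B x)).
  - intro x; tauto.
  - apply borel_compl, borel_union; apply borel_compl; auto.
Qed.
Lemma borel_F : borel (fun _ => False).
Proof. apply borel_ext with (fun x => ~ True). tauto. apply borel_compl, borel_T. Qed.
Lemma borel_lt b : borel (fun x => x < b).
Proof.
  apply borel_ext with (fun x => exists n:nat, b - INR n < x < b).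
  - intro x; split. intros [n Hn]; lra.
    intro H. destruct (archimed (b - x)) as [H1 _].
    exists (Z.to_nat (up (b - x))). rewrite INR_IZR_INZ, Z2Nat.id.
    + lra.
    + apply le_IZR. pose proof (archimed (b-x)). lra.
  - apply borel_cunion; intro; apply borel_interval.
Qed.
Lemma borel_ge a : borel (fun x => a <= x).
Proof. apply borel_ext with (fun x => ~ x < a). intro; lra. apply borel_compl, borel_lt. Qed.
Lemma borel_gt a : borel (fun x => a < x).
Proof.
  apply borel_ext with (fun x => exists n:nat, a < x < a + INR n).
  - intro x; split. intros [n Hn]; lra.
    intro H. destruct (archimed (x - a)) as [H1 _].
    exists (Z.to_nat (up (x - a))). rewrite INR_IZR_INZ, Z2Nat.id.
    + lra.
    + apply le_IZR. pose proof (archimed (x-a)). lra.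
  - apply borel_cunion; intro; apply borel_interval.
Qed.
Lemma borel_le b : borel (fun x => x <= b).
Proof. apply borel_ext with (fun x => ~ b < x). intro; lra. apply borel_compl, borel_gt. Qed.
Lemma borel_unit : borel unit_interval.
Proof. unfold unit_interval. apply borel_inter; [apply borel_ge|apply borel_le]. Qed.
Lemma borel_pt a : borel (fun x => x = a).
Proof.
  apply borel_ext with (fun x => a <= x /\ x <= a). intro; lra.
  apply borel_inter; [apply borel_ge|apply borel_le].
Qed.


Lemma set_ext (A B : R -> Prop) : (forall x, A x <-> B x) -> A = B.
Proof. intro H. apply functional_extensionality; intro x; apply propositional_extensionality; auto. Qed.

Lemma sum_rsum u m : sum_f_R0 u m = rsum u (Datatypes.S m).
Proof. induction m as [|m IHm]; simpl. ring. rewrite IHm. simpl. ring. Qed.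

Lemma rsum_stable u n m : (n <= m)%nat -> (forall i, (i >= n)%nat -> u i = 0) -> rsum u m = rsum u n.
Proof.
  intros Hle H. induction Hle; auto. simpl. rewrite IHHle, H; [ring| lia].
Qed.

Lemma inf_sum_eventually u l n :
  infinite_sum u l -> (forall i, (i >= n)%nat -> u i = 0) -> l = rsum u n.
Proof.
  intros Hs Hz. apply (uniqueness_sum u); auto.
  intros eps Heps. exists n. intros m Hm. rewrite sum_rsum.
  rewrite (rsum_stable u n (Datatypes.S m)); [|lia|auto]. unfold Rdist. rewrite Rminus_diag, Rabs_R0; lra.
Qed.

Lemma inf_sum_const c l : infinite_sum (fun _ => c) l -> c = 0.
Proof.
  intros H. destruct (Req_dec c 0) as [|Hc]; auto. exfalso.
  assert (Hp : Rabs c / 2 > 0) by (pose proof (Rabs_pos_lt c Hc); lra).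
  destruct (H _ Hp) as [N HN].
  pose proof (HN N (le_n N)) as H1. pose proof (HN (Datatypes.S N) ltac:(lia)) as H2.
  unfold Rdist in *. simpl sum_f_R0 in H2.
  assert (Rabs c <= Rabs (sum_f_R0 (fun _ => c) N + c - l) + Rabs (sum_f_R0 (fun _ => c) N - l)).
  { replace c with ((sum_f_R0 (fun _ => c) N + c - l) - (sum_f_R0 (fun _ => c) N - l)) at 1 by ring.
    apply Rabs_triang_inv2 || (unfold Rminus at 1; eapply Rle_trans; [apply Rabs_triang|rewrite Rabs_Ropp; lra]). }
  lra.
Qed.

Lemma mu_nonneg mu A : prior mu -> borel A -> 0 <= mu A.
Proof. intros [H _] HA; auto. Qed.

Lemma mu_empty mu : prior mu -> mu (fun _ => False) = 0.
Proof.
  intros Hp. destruct Hp as [_ [_ [_ Hc]]].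
  specialize (Hc (fun _ _ => False) (fun _ => borel_F) ltac:(auto)).
  replace (fun x : R => exists _ : nat, False) with (fun _ : R => False) in Hc
    by (apply set_ext; intro; split; [tauto| intros [_ []]]).
  eapply inf_sum_const; eauto.
Qed.

Lemma mu_finite_add mu (B : nat -> R -> Prop) n : prior mu ->
  (forall i, (i < n)%nat -> borel (B i)) ->
  (forall i j x, (i < n)%nat -> (j < n)%nat -> i <> j -> B i x -> B j x -> False) ->
  mu (fun x => exists i, (i < n)%nat /\ B i x) = rsum (fun i => mu (B i)) n.
Proof.
  intros Hp HB Hd.
  set (A := fun i => if Nat.ltb i n then B i else (fun _ : R => False)).
  pose proof Hp as [_ [_ [_ Hc]]].
  assert (HA : forall i, borel (A i)).
  { intro i; unfold A; destruct (Nat.ltb_spec i n); auto using borel_F. }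
  assert (HAd : forall m k x, m <> k -> A m x -> A k x -> False).
  { intros m k x Hmk; unfold A; destruct (Nat.ltb_spec m n), (Nat.ltb_spec k n); eauto. }
  specialize (Hc A HA HAd).
  replace (fun x => exists i, A i x) with (fun x => exists i, (i < n)%nat /\ B i x) in Hc.
  2:{ apply set_ext; intro x; split.
      - intros [i [Hi Hx]]; exists i; unfold A; destruct (Nat.ltb_spec i n); auto; lia.
      - intros [i Hx]; exists i; unfold A in Hx; destruct (Nat.ltb_spec i n); auto; contradiction. }
  rewrite (inf_sum_eventually _ _ n Hc).
  - clear Hc. assert (forall m, (m <= n)%nat -> rsum (fun i => mu (A i)) m = rsum (fun i => mu (B i)) m).
    { induction m; simpl; auto. intro Hm. rewrite IHm by lia. unfold A.
      destruct (Nat.ltb_spec m n); auto; lia. }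
    apply H; lia.
  - intros i Hi. unfold A. destruct (Nat.ltb_spec i n); [lia|]. apply mu_empty; auto.
Qed.

Lemma mu_add2 mu A B : prior mu -> borel A -> borel B -> (forall x, A x -> B x -> False) ->
  mu (fun x => A x \/ B x) = mu A + mu B.
Proof.
  intros Hp HA HB Hd.
  pose proof (mu_finite_add mu (fun i => if Nat.eqb i 0 then A else B) 2 Hp) as H.
  simpl in H.
  replace (fun x => A x \/ B x) with (fun x => exists i, (i < 2)%nat /\ (if Nat.eqb i 0 then A else B) x).
  - rewrite H. ring.
    + intros i Hi. destruct (Nat.eqb i 0); auto.
    + intros i j x Hi Hj Hij. destruct i as [|[|]], j as [|[|]]; simpl; try lia; eauto.
  - apply set_ext; intro x; split.
    + intros [i [Hi Hx]]. destruct i as [|[|]]; simpl in Hx; auto; lia.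
    + intros [Hx|Hx]; [exists 0%nat|exists 1%nat]; simpl; auto.
Qed.

Lemma mu_mono mu A B : prior mu -> borel A -> borel B -> (forall x, A x -> B x) -> mu A <= mu B.
Proof.
  intros Hp HA HB Hs.
  replace B with (fun x => A x \/ (B x /\ ~ A x)).
  - rewrite mu_add2; auto. pose proof (mu_nonneg mu (fun x => B x /\ ~ A x) Hp
       (borel_inter _ _ HB (borel_compl _ HA))). lra.
    apply borel_inter; auto using borel_compl. intros x H1 [_ H2]; auto.
  - apply set_ext; intro x; split; [intros [H|[H _]]; auto|]. intro H; destruct (classic (A x)); auto.
Qed.

Lemma mu_le1 mu A : prior mu -> borel A -> mu A <= 1.
Proof.
  intros Hp HA. pose proof Hp as [_ [H1 _]]. rewrite <- H1. apply mu_mono; auto using borel_T.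
Qed.

Lemma mu_subadd mu A B : prior mu -> borel A -> borel B -> mu (fun x => A x \/ B x) <= mu A + mu B.
Proof.
  intros Hp HA HB.
  replace (fun x => A x \/ B x) with (fun x => A x \/ (B x /\ ~ A x)).
  - rewrite mu_add2; auto. pose proof (mu_mono mu (fun x => B x /\ ~ A x) B Hp
       (borel_inter _ _ HB (borel_compl _ HA)) HB (fun x H => proj1 H)). lra.
    apply borel_inter; auto using borel_compl. intros x H1 [_ H2]; auto.
  - apply set_ext; intro x; split; [intros [H|[H _]]; auto|]. intros [H|H]; auto. destruct (classic (A x)); auto.
Qed.


Lemma rsum_plus f g n : rsum (fun i => f i + g i) n = rsum f n + rsum g n.
Proof. induction n; simpl; [ring|rewrite IHn; ring]. Qed.
Lemma rsum_scal c f n : rsum (fun i => c * f i) n = c * rsum f n.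
Proof. induction n; simpl; [ring|rewrite IHn; ring]. Qed.
Lemma rsum_le f g n : (forall i, (i < n)%nat -> f i <= g i) -> rsum f n <= rsum g n.
Proof. induction n; simpl; intros H; [lra|]. pose proof (H n ltac:(lia)). pose proof (IHn ltac:(intros; apply H; lia)). lra. Qed.
Lemma rsum_ext f g n : (forall i, (i < n)%nat -> f i = g i) -> rsum f n = rsum g n.
Proof. induction n; simpl; intros H; auto. rewrite IHn, H; auto; intros; apply H; lia. Qed.
Lemma rsum_swap (a : nat -> nat -> R) n m :
  rsum (fun i => rsum (fun k => a i k) m) n = rsum (fun k => rsum (fun i => a i k) n) m.
Proof.
  induction n; simpl.
  - induction m; simpl; auto. rewrite <- IHm; ring.
  - rewrite IHn. rewrite <- rsum_plus. auto.
Qed.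
Lemma rsum_abs f n : Rabs (rsum f n) <= rsum (fun i => Rabs (f i)) n.
Proof.
  induction n; simpl. rewrite Rabs_R0; lra.
  eapply Rle_trans; [apply Rabs_triang|]. lra.
Qed.
Lemma rsum_nonneg f n : (forall i, (i < n)%nat -> 0 <= f i) -> 0 <= rsum f n.
Proof. intro H. replace 0 with (rsum (fun _ => 0) n). apply rsum_le; auto.
  induction n; simpl; auto. rewrite IHn; [ring|intros; apply H; lia]. Qed.

Lemma borel_funion (B : nat -> R -> Prop) n : (forall i, (i < n)%nat -> borel (B i)) ->
  borel (fun x => exists i, (i < n)%nat /\ B i x).
Proof.
  intro HB.
  apply borel_ext with (fun x => exists i, (if Nat.ltb i n then B i else fun _ => False) x).
  - intro x; split.
    + intros [i Hi]; exists i; destruct (Nat.ltb_spec i n); [auto|contradiction].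
    + intros [i [Hi Hx]]; exists i; destruct (Nat.ltb_spec i n); [auto|lia].
  - apply borel_cunion; intro i; destruct (Nat.ltb_spec i n); auto using borel_F.
Qed.

Definition cell (N k : nat) (x : R) : Prop :=
  0 <= x <= 1 /\ INR k <= INR N * x < INR k + 1.

Definition pt (N k : nat) : R := INR k / INR N.

Definition RS (mu : (R -> Prop) -> R) (f : R -> R) (N : nat) : R :=
  rsum (fun k => mu (cell N k) * f (pt N k)) (Datatypes.S N).

Lemma INRpos N : (1 <= N)%nat -> 0 < INR N.
Proof. intro; apply lt_0_INR; lia. Qed.

Lemma div_le_iff a p x : 0 < p -> (a <= p * x <-> a / p <= x).
Proof.
  intro Hp. split; intro H.
  - apply Rmult_le_reg_r with p; auto. unfold Rdiv. rewrite Rmult_assoc, Rinv_l by lra. lra.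
  - apply Rmult_le_compat_r with (r := p) in H; [|lra]. unfold Rdiv in H.
    rewrite Rmult_assoc, Rinv_l in H by lra. lra.
Qed.
Lemma div_lt_iff a p x : 0 < p -> (p * x < a <-> x < a / p).
Proof.
  intro Hp. split; intro H.
  - apply Rmult_lt_reg_r with p; auto. unfold Rdiv. rewrite Rmult_assoc, Rinv_l by lra. lra.
  - apply Rmult_lt_compat_r with (r := p) in H; [|lra]. unfold Rdiv in H.
    rewrite Rmult_assoc, Rinv_l in H by lra. lra.
Qed.

Lemma borel_cell N k : (1 <= N)%nat -> borel (cell N k).
Proof.
  intro HN. pose proof (INRpos N HN) as Hp.
  apply borel_ext with (fun x => (0 <= x /\ x <= 1) /\ (INR k / INR N <= x /\ x < (INR k + 1) / INR N)).
  - intro x; unfold cell. rewrite <- div_le_iff, <- div_lt_iff by auto. tauto.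
  - apply borel_inter; [apply borel_unit|apply borel_inter; [apply borel_ge|apply borel_lt]].
Qed.

Lemma cell_disj N k j x : cell N k x -> cell N j x -> k = j.
Proof.
  unfold cell; intros [_ [H1 H2]] [_ [H3 H4]].
  assert (INR k < INR (Datatypes.S j)) by (rewrite S_INR; lra).
  assert (INR j < INR (Datatypes.S k)) by (rewrite S_INR; lra).
  apply INR_lt in H; apply INR_lt in H0. lia.
Qed.

Lemma cell_cover N x : (1 <= N)%nat -> 0 <= x <= 1 -> exists k, (k < Datatypes.S N)%nat /\ cell N k x.
Proof.
  intros HN Hx. pose proof (INRpos N HN) as Hp.
  set (r := INR N * x).
  assert (Hr : 0 <= r <= INR N) by (unfold r; nra).
  destruct (base_Int_part r) as [H1 H2].
  assert (Hz : (0 <= Int_part r)%Z). { apply le_IZR. assert (IZR (Int_part r) > -1) by lra.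
    assert (-1 < IZR (Int_part r)) by lra. apply lt_IZR in H0. apply IZR_le. lia. }
  exists (Z.to_nat (Int_part r)).
  assert (Hk : INR (Z.to_nat (Int_part r)) = IZR (Int_part r)).
  { rewrite INR_IZR_INZ, Z2Nat.id; auto. }
  split.
  - assert (INR (Z.to_nat (Int_part r)) <= INR N) by lra. apply INR_le in H. lia.
  - unfold cell. fold r. rewrite Hk. split; [auto|lra].
Qed.

Lemma pt_unit N k : (1 <= N)%nat -> (k <= N)%nat -> 0 <= pt N k <= 1.
Proof.
  intros HN Hk. pose proof (INRpos N HN). unfold pt. split.
  - apply Rmult_le_pos; [apply pos_INR| left; apply Rinv_0_lt_compat; auto].
  - apply le_INR in Hk. apply Rmult_le_reg_r with (INR N); auto. unfold Rdiv.
    rewrite Rmult_assoc, Rinv_l by lra. lra.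
Qed.

Lemma cell_close N k x : (1 <= N)%nat -> cell N k x -> 0 <= x - pt N k < / INR N.
Proof.
  intros HN [Hx [H1 H2]]. pose proof (INRpos N HN). unfold pt.
  assert (INR k / INR N <= x) by (apply div_le_iff; auto).
  assert (x < (INR k + 1) / INR N) by (apply div_lt_iff; auto).
  unfold Rdiv in *. rewrite Rmult_plus_distr_r in H3. lra.
Qed.

Lemma sum_cells mu N : prior mu -> (1 <= N)%nat -> rsum (fun k => mu (cell N k)) (Datatypes.S N) = 1.
Proof.
  intros Hp HN. rewrite <- mu_finite_add; auto.
  - pose proof Hp as [_ [_ [H _]]]. rewrite <- H. f_equal. apply set_ext; intro x; split.
    + intros [k [_ [Hx _]]]; exact Hx.
    + intro Hx. apply cell_cover; auto.
  - intros; apply borel_cell; auto.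
  - intros i j x _ _ Hij H1 H2. apply Hij. eapply cell_disj; eauto.
Qed.

Lemma RS_close mu f N c eps : prior mu -> (1 <= N)%nat ->
  (forall k, (k <= N)%nat -> mu (cell N k) <> 0 -> Rabs (f (pt N k) - c) <= eps) ->
  Rabs (RS mu f N - c) <= eps.
Proof.
  intros Hp HN H. pose proof (sum_cells mu N Hp HN) as Hs.
  replace (RS mu f N - c) with (rsum (fun k => mu (cell N k) * (f (pt N k) - c)) (Datatypes.S N)).
  2:{ rewrite (rsum_ext _ (fun k => mu (cell N k) * f (pt N k) + (-c) * mu (cell N k))) by (intros; ring).
      rewrite rsum_plus, rsum_scal, Hs. unfold RS. ring. }
  eapply Rle_trans; [apply rsum_abs|].
  replace eps with (rsum (fun k => mu (cell N k) * eps) (Datatypes.S N))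
    by (rewrite (rsum_ext _ (fun k => eps * mu (cell N k))) by (intros; ring); rewrite rsum_scal, Hs; ring).
  apply rsum_le. intros i Hi. rewrite Rabs_mult.
  pose proof (mu_nonneg mu _ Hp (borel_cell N i HN)).
  rewrite Rabs_pos_eq by auto.
  destruct (Req_dec (mu (cell N i)) 0) as [E|E]; [rewrite E; lra|].
  apply Rmult_le_compat_l; auto. apply H; auto; lia.
Qed.


Lemma ls_nonempty mu f : exists e, (fun e => exists v, lower_sum mu f v /\ e = Fin v) e.
Proof.
  exists (Fin 0), 0. split; auto. exists 0%nat, (fun _ _ => False), (fun _ => 0).
  repeat split; intros; try lia.
Qed.

Lemma int_ge_lower mu f v : lower_sum mu f v -> ele (Fin v) (integral mu f).
Proof.
  intro H. pose proof (esup_spec _ (ls_nonempty mu f)) as [H1 _]. apply H1. eauto.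
Qed.

Lemma int_le_upper mu f u : (forall v, lower_sum mu f v -> ele (Fin v) u) -> ele (integral mu f) u.
Proof.
  intro H. pose proof (esup_spec _ (ls_nonempty mu f)) as [_ H2]. apply H2.
  intros x [v [Hv ->]]; auto.
Qed.

Lemma int_nonneg mu f : ele (Fin 0) (integral mu f).
Proof.
  apply int_ge_lower. exists 0%nat, (fun _ _ => False), (fun _ => 0).
  repeat split; intros; try lia.
Qed.

Lemma int_mono mu f g :
  (forall x c, 0 <= x <= 1 -> 0 <= c -> ele (Fin c) (f x) -> ele (Fin c) (g x)) ->
  ele (integral mu f) (integral mu g).
Proof.
  intro H. apply int_le_upper. intros v [n [A [c [H1 [H2 [H3 [H4 [H5 H6]]]]]]]].
  apply int_ge_lower. exists n, A, c. split; [auto|split; [auto|split;[auto|split;[auto|split;[|auto]]]]].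
  intros i x Hi Hx. apply H; auto. apply (H2 i x); auto.
Qed.

Definition UC (f : R -> R) : Prop :=
  forall eps, 0 < eps -> exists d, 0 < d /\ forall x y, 0 <= x <= 1 -> 0 <= y <= 1 ->
    Rabs (x - y) < d -> Rabs (f x - f y) < eps.

Definition Ev (mu : (R -> Prop) -> R) (f : R -> R) (r : R) : Prop :=
  forall eps, 0 < eps -> exists N0, forall N, (N0 <= N)%nat -> Rabs (RS mu f N - r) <= eps.

Lemma mesh_small d : 0 < d -> exists N0, (1 <= N0)%nat /\ forall N, (N0 <= N)%nat -> / INR N <= d.
Proof.
  intro Hd. destruct (archimed (/ d)) as [H1 _].
  assert (0 < / d) by (apply Rinv_0_lt_compat; auto).
  assert (Hz : (0 <= up (/ d))%Z) by (apply le_IZR; lra).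
  exists (Datatypes.S (Z.to_nat (up (/ d)))). split; [lia|].
  intros N HN. apply le_INR in HN. rewrite S_INR, INR_IZR_INZ, Z2Nat.id in HN by auto.
  assert (0 < INR N) by lra.
  replace d with (/ / d) by (field; lra). apply Rinv_le_contravar; lra.
Qed.

Lemma int_lower_RS mu f eps d N : prior mu -> (forall x, 0 <= x <= 1 -> 0 <= f x) -> 0 < eps ->
  (forall x y, 0 <= x <= 1 -> 0 <= y <= 1 -> Rabs (x - y) < d -> Rabs (f x - f y) < eps) ->
  (1 <= N)%nat -> / INR N <= d ->
  ele (Fin (RS mu f N - eps)) (integral mu (fun x => Fin (f x))).
Proof.
  intros Hp Hf He Hd HN HNd.
  eapply ele_trans; [|apply int_ge_lower with (v := rsum (fun k => mu (cell N k) * Rmax 0 (f (pt N k) - eps)) (Datatypes.S N))].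
  - unfold ele. unfold RS. replace (rsum (fun k => mu (cell N k) * f (pt N k)) (Datatypes.S N) - eps) with
      (rsum (fun k => mu (cell N k) * (f (pt N k) - eps)) (Datatypes.S N)).
    + apply rsum_le. intros i Hi. apply Rmult_le_compat_l.
      apply mu_nonneg; auto; apply borel_cell; auto. apply Rmax_r.
    + rewrite (rsum_ext _ (fun k => mu (cell N k) * f (pt N k) + (-eps) * mu (cell N k))) by (intros; ring).
      rewrite rsum_plus, rsum_scal, sum_cells; auto. ring.
  - exists (Datatypes.S N), (cell N), (fun k => Rmax 0 (f (pt N k) - eps)).
    refine (conj _ (conj _ (conj _ (conj _ (conj _ _))))).
    + intros; apply borel_cell; auto.
    + intros i x _ [Hx _]; exact Hx.
    + intros i j x _ _ Hij H1 H2; apply Hij; eapply cell_disj; eauto.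
    + intros; apply Rmax_l.
    + intros i x Hi Hx. simpl. pose proof (cell_close N i x HN Hx).
      destruct Hx as [Hx _].
      assert (Rabs (x - pt N i) < d) by (rewrite Rabs_pos_eq; lra).
      specialize (Hd x (pt N i) Hx (pt_unit N i HN ltac:(lia)) H0).
      apply Rabs_def2 in Hd. pose proof (Hf x Hx).
      apply Rmax_lub; lra.
    + reflexivity.
Qed.

Lemma int_upper_RS mu f eps d N : prior mu -> (forall x, 0 <= x <= 1 -> 0 <= f x) -> 0 < eps ->
  (forall x y, 0 <= x <= 1 -> 0 <= y <= 1 -> Rabs (x - y) < d -> Rabs (f x - f y) < eps) ->
  (1 <= N)%nat -> / INR N <= d ->
  ele (integral mu (fun x => Fin (f x))) (Fin (RS mu f N + eps)).
Proof.
  intros Hp Hf He Hd HN HNd.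
  apply int_le_upper. intros v [n [A [c [HA [HAu [HAd [Hc [Hcf ->]]]]]]]]. unfold ele.
  set (B := fun i k x => A i x /\ cell N k x).
  assert (HB : forall i k, (i < n)%nat -> borel (B i k)).
  { intros; apply borel_inter; auto; apply borel_cell; auto. }
  assert (E1 : forall i, (i < n)%nat -> mu (A i) = rsum (fun k => mu (B i k)) (Datatypes.S N)).
  { intros i Hi. rewrite <- mu_finite_add; auto.
    - f_equal. apply set_ext; intro x; split.
      + intro Hx. destruct (cell_cover N x HN (HAu i x Hi Hx)) as [k [Hk Hc']]. exists k; split; auto; split; auto.
      + intros [k [_ [Hx _]]]; auto.
    - intros j j' x _ _ Hjj [_ H1] [_ H2]; apply Hjj; eapply cell_disj; eauto. }
  apply Rle_trans with (rsum (fun i => rsum (fun k => mu (B i k) * (f (pt N k) + eps)) (Datatypes.S N)) n).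
  - apply rsum_le. intros i Hi. rewrite E1 by auto. rewrite Rmult_comm, <- rsum_scal.
    apply rsum_le. intros k Hk.
    destruct (classic (exists x, B i k x)) as [[x Hx]|Hno].
    + rewrite Rmult_comm. apply Rmult_le_compat_l; [apply mu_nonneg; auto|].
      destruct Hx as [HxA HxC]. pose proof (cell_close N k x HN HxC).
      pose proof (Hcf i x Hi HxA) as Hcx. simpl in Hcx.
      assert (Rabs (x - pt N k) < d) by (rewrite Rabs_pos_eq; lra).
      pose proof (Hd x (pt N k) (HAu i x Hi HxA) (pt_unit N k HN ltac:(lia)) H0).
      apply Rabs_def2 in H1. lra.
    + replace (B i k) with (fun _ : R => False) by (apply set_ext; intro x; split; [tauto|intro; apply Hno; eauto]).
      rewrite mu_empty; auto. right; ring.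
  - rewrite rsum_swap. unfold RS.
    rewrite (rsum_ext (fun k => rsum (fun i => mu (B i k) * (f (pt N k) + eps)) n)
       (fun k => (f (pt N k) + eps) * rsum (fun i => mu (B i k)) n))
       by (intros; rewrite <- rsum_scal; apply rsum_ext; intros; ring).
    apply Rle_trans with (rsum (fun k => (f (pt N k) + eps) * mu (cell N k)) (Datatypes.S N)).
    + apply rsum_le. intros k Hk. apply Rmult_le_compat_l.
      * pose proof (Hf _ (pt_unit N k HN ltac:(lia))); lra.
      * rewrite <- mu_finite_add; auto.
        -- apply mu_mono; auto. apply borel_funion; auto. apply borel_cell; auto.
           intros x [i [_ [_ H]]]; auto.
        -- intros i j x Hi Hj Hij [H1 _] [H2 _]; eapply HAd; eauto.
    + right. rewrite (rsum_ext _ (fun k => mu (cell N k) * f (pt N k) + eps * mu (cell N k))) by (intros; ring).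
      rewrite rsum_plus, rsum_scal, sum_cells; auto. ring.
Qed.

Lemma int_fin mu f : prior mu -> (forall x, 0 <= x <= 1 -> 0 <= f x) -> UC f ->
  exists r, integral mu (fun x => Fin (f x)) = Fin r /\ Ev mu f r.
Proof.
  intros Hp Hf Hu.
  destruct (Hu 1 ltac:(lra)) as [d1 [Hd1 Hd1']].
  destruct (mesh_small d1 Hd1) as [N1 [HN1 HN1']].
  pose proof (int_upper_RS mu f 1 d1 N1 Hp Hf ltac:(lra) Hd1' HN1 (HN1' N1 (le_n _))) as Hup.
  destruct (integral mu (fun x => Fin (f x))) as [r|] eqn:Ei; [|unfold ele in Hup; contradiction].
  exists r; split; auto.
  intros eps He. destruct (Hu eps He) as [d [Hd Hd']].
  destruct (mesh_small d Hd) as [N0 [HN0 HN0']].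
  exists N0. intros N HN.
  pose proof (int_upper_RS mu f eps d N Hp Hf He Hd' ltac:(lia) (HN0' N HN)) as U.
  pose proof (int_lower_RS mu f eps d N Hp Hf He Hd' ltac:(lia) (HN0' N HN)) as L.
  rewrite Ei in U, L. unfold ele in U, L. apply Rabs_le; lra.
Qed.


Lemma abs_le x a : Rabs x <= a -> - a <= x <= a.
Proof. unfold Rabs; destruct (Rcase_abs x); lra. Qed.

Lemma Ev_unique mu f r s : Ev mu f r -> Ev mu f s -> r = s.
Proof.
  intros H1 H2. apply Rminus_diag_uniq. destruct (Req_dec (r - s) 0) as [|Hne]; auto.
  assert (He : Rabs (r - s) / 3 > 0) by (pose proof (Rabs_pos_lt _ Hne); lra).
  destruct (H1 _ He) as [N1 HN1]. destruct (H2 _ He) as [N2 HN2].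
  specialize (HN1 (Nat.max N1 N2) ltac:(lia)). specialize (HN2 (Nat.max N1 N2) ltac:(lia)).
  set (x := RS mu f (Nat.max N1 N2)) in *.
  assert (Rabs (r - s) <= Rabs (x - r) + Rabs (x - s)).
  { replace (r - s) with (- (x - r) + (x - s)) by ring. eapply Rle_trans; [apply Rabs_triang|].
    rewrite Rabs_Ropp; lra. }
  lra.
Qed.

Lemma RS_plus mu f g N : RS mu (fun x => f x + g x) N = RS mu f N + RS mu g N.
Proof. unfold RS. rewrite <- rsum_plus. apply rsum_ext; intros; ring. Qed.
Lemma RS_scal mu c f N : RS mu (fun x => c * f x) N = c * RS mu f N.
Proof. unfold RS. rewrite <- rsum_scal. apply rsum_ext; intros; ring. Qed.

Lemma Ev_plus mu f g r s : Ev mu f r -> Ev mu g s -> Ev mu (fun x => f x + g x) (r + s).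
Proof.
  intros H1 H2 eps He. destruct (H1 (eps/2) ltac:(lra)) as [N1 HN1]. destruct (H2 (eps/2) ltac:(lra)) as [N2 HN2].
  exists (Nat.max N1 N2). intros N HN. rewrite RS_plus.
  specialize (HN1 N ltac:(lia)); specialize (HN2 N ltac:(lia)).
  replace (RS mu f N + RS mu g N - (r + s)) with ((RS mu f N - r) + (RS mu g N - s)) by ring.
  eapply Rle_trans; [apply Rabs_triang|]. lra.
Qed.

Lemma Ev_scal mu c f r : Ev mu f r -> Ev mu (fun x => c * f x) (c * r).
Proof.
  intros H eps He. destruct (H (eps / (Rabs c + 1))) as [N0 HN0].
  { apply Rdiv_lt_0_compat; auto. pose proof (Rabs_pos c); lra. }
  exists N0. intros N HN. rewrite RS_scal.
  replace (c * RS mu f N - c * r) with (c * (RS mu f N - r)) by ring.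
  rewrite Rabs_mult. specialize (HN0 N HN).
  pose proof (Rabs_pos c). pose proof (Rabs_pos (RS mu f N - r)).
  apply Rle_trans with (Rabs c * (eps / (Rabs c + 1))).
  - apply Rmult_le_compat_l; auto.
  - unfold Rdiv. rewrite <- Rmult_assoc. apply Rmult_le_reg_r with (Rabs c + 1); [lra|].
    rewrite Rmult_assoc, Rinv_l by lra. nra.
Qed.

Lemma Ev_ext mu f g r : (forall x, 0 <= x <= 1 -> f x = g x) -> Ev mu f r -> Ev mu g r.
Proof.
  intros Hfg H eps He. destruct (H eps He) as [N0 HN0]. exists (Nat.max N0 1). intros N HN.
  replace (RS mu g N) with (RS mu f N).
  - apply HN0; lia.
  - unfold RS. apply rsum_ext. intros k Hk. rewrite Hfg; auto. apply pt_unit; lia.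
Qed.

Lemma RS_mono mu f g N : prior mu -> (1 <= N)%nat -> (forall x, 0 <= x <= 1 -> f x <= g x) ->
  RS mu f N <= RS mu g N.
Proof.
  intros Hp HN H. unfold RS. apply rsum_le. intros k Hk. apply Rmult_le_compat_l.
  apply mu_nonneg; auto; apply borel_cell; auto. apply H, pt_unit; lia.
Qed.

Lemma Ev_mono mu f g r s : prior mu -> (forall x, 0 <= x <= 1 -> f x <= g x) ->
  Ev mu f r -> Ev mu g s -> r <= s.
Proof.
  intros Hp Hfg H1 H2. apply Rnot_lt_le; intro Hlt.
  destruct (H1 ((r - s)/3) ltac:(lra)) as [N1 HN1]. destruct (H2 ((r - s)/3) ltac:(lra)) as [N2 HN2].
  set (N := Nat.max (Nat.max N1 N2) 1).
  specialize (HN1 N ltac:(unfold N; lia)); specialize (HN2 N ltac:(unfold N; lia)).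
  pose proof (RS_mono mu f g N Hp ltac:(unfold N; lia) Hfg).
  apply abs_le in HN1; apply abs_le in HN2. lra.
Qed.

Lemma Ev_const mu c : prior mu -> Ev mu (fun _ => c) c.
Proof.
  intros Hp eps He. exists 1%nat. intros N HN. unfold RS.
  rewrite (rsum_ext _ (fun k => c * mu (cell N k))) by (intros; ring).
  rewrite rsum_scal, sum_cells by auto. rewrite Rmult_1_r, Rminus_diag, Rabs_R0; lra.
Qed.

Lemma UC_plus f g : UC f -> UC g -> UC (fun x => f x + g x).
Proof.
  intros H1 H2 eps He. destruct (H1 (eps/2) ltac:(lra)) as [d1 [Hd1 H1']].
  destruct (H2 (eps/2) ltac:(lra)) as [d2 [Hd2 H2']].
  exists (Rmin d1 d2). split; [apply Rmin_pos; auto|]. intros x y Hx Hy Hxy.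
  pose proof (Rmin_l d1 d2); pose proof (Rmin_r d1 d2).
  specialize (H1' x y Hx Hy ltac:(lra)); specialize (H2' x y Hx Hy ltac:(lra)).
  replace (f x + g x - (f y + g y)) with ((f x - f y) + (g x - g y)) by ring.
  eapply Rle_lt_trans; [apply Rabs_triang|]. lra.
Qed.

Lemma UC_scal c f : UC f -> UC (fun x => c * f x).
Proof.
  intros H eps He. destruct (H (eps / (Rabs c + 1))) as [d [Hd H']].
  { apply Rdiv_lt_0_compat; auto. pose proof (Rabs_pos c); lra. }
  exists d. split; auto. intros x y Hx Hy Hxy. specialize (H' x y Hx Hy Hxy).
  replace (c * f x - c * f y) with (c * (f x - f y)) by ring. rewrite Rabs_mult.
  pose proof (Rabs_pos c). pose proof (Rabs_pos (f x - f y)).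
  apply Rle_lt_trans with (Rabs c * (eps / (Rabs c + 1))).
  - apply Rmult_le_compat_l; lra.
  - unfold Rdiv. rewrite <- Rmult_assoc. apply Rmult_lt_reg_r with (Rabs c + 1); [lra|].
    rewrite Rmult_assoc, Rinv_l by lra. nra.
Qed.

Lemma UC_const c : UC (fun _ => c).
Proof. intros eps He. exists 1. split; [lra|]. intros. rewrite Rminus_diag, Rabs_R0; auto. Qed.

Lemma UC_max0 f : UC f -> UC (fun x => Rmax (f x) 0).
Proof.
  intros H eps He. destruct (H eps He) as [d [Hd H']]. exists d; split; auto.
  intros x y Hx Hy Hxy. specialize (H' x y Hx Hy Hxy).
  apply Rabs_def2 in H'. apply Rabs_def1;
  unfold Rmax; destruct (Rle_dec (f x) 0), (Rle_dec (f y) 0); lra.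
Qed.

Lemma UC_cont f : (forall x, 0 <= x <= 1 -> continuity_pt f x) -> UC f.
Proof.
  intros Hc eps He. pose proof (Heine f (fun x => 0 <= x <= 1) (compact_P3 0 1) Hc) as Hu.
  destruct (Hu (mkposreal eps He)) as [d Hd]. exists d. split; [apply cond_pos|].
  intros x y Hx Hy Hxy. apply (Hd x y); auto.
Qed.

Lemma Ev_exists mu f : prior mu -> UC f -> exists r, Ev mu f r.
Proof.
  intros Hp Hu.
  destruct (int_fin mu (fun x => Rmax (f x) 0) Hp ltac:(intros; apply Rmax_r) (UC_max0 f Hu)) as [r1 [_ H1]].
  destruct (int_fin mu (fun x => Rmax (-1 * f x) 0) Hp ltac:(intros; apply Rmax_r)
     (UC_max0 _ (UC_scal (-1) f Hu))) as [r2 [_ H2]].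
  exists (r1 + -1 * r2). apply Ev_ext with (fun x => Rmax (f x) 0 + -1 * Rmax (-1 * f x) 0).
  - intros x _. unfold Rmax. destruct (Rle_dec (f x) 0), (Rle_dec (-1 * f x) 0); lra.
  - apply Ev_plus; auto. apply Ev_scal; auto.
Qed.

Lemma int_eq mu f r : prior mu -> (forall x, 0 <= x <= 1 -> 0 <= f x) -> UC f -> Ev mu f r ->
  integral mu (fun x => Fin (f x)) = Fin r.
Proof.
  intros Hp Hf Hu He. destruct (int_fin mu f Hp Hf Hu) as [r' [E1 E2]].
  rewrite E1. f_equal. eapply Ev_unique; eauto.
Qed.

Definition dirac (t : R) (A : R -> Prop) : R :=
  if excluded_middle_informative (A t) then 1 else 0.

Lemma inf_sum_of_eventually u n : (forall i, (i >= n)%nat -> u i = 0) -> infinite_sum u (rsum u n).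
Proof.
  intros Hz eps He. exists n. intros m Hm. rewrite sum_rsum.
  rewrite (rsum_stable u n (Datatypes.S m)); [|lia|auto]. unfold Rdist. rewrite Rminus_diag, Rabs_R0; lra.
Qed.

Lemma dirac_prior t : 0 <= t <= 1 -> prior (dirac t).
Proof.
  intro Ht. unfold prior, dirac. split; [|split; [|split]].
  - intros A _. destruct (excluded_middle_informative (A t)); lra.
  - destruct (excluded_middle_informative True); tauto.
  - destruct (excluded_middle_informative (unit_interval t)); [auto|contradiction].
  - intros A _ Hd. destruct (classic (exists n, A n t)) as [[n0 Hn0]|Hno].
    + destruct (excluded_middle_informative (exists n, A n t)) as [_|C]; [|exfalso; eauto].
      set (u := fun n => if excluded_middle_informative (A n t) then 1 else 0).
      assert (Hs : rsum u (Datatypes.S n0) = 1).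
      { simpl. unfold u at 2. destruct (excluded_middle_informative (A n0 t)); [|contradiction].
        rewrite (rsum_ext _ (fun _ => 0)).
        { clear. induction n0 as [|n0 IH]; simpl in *; lra. }
        intros i Hi. unfold u. destruct (excluded_middle_informative (A i t)); auto. exfalso; apply (Hd i n0 t); auto; lia. }
      assert (Hi : infinite_sum u (rsum u (Datatypes.S n0))).
      { apply inf_sum_of_eventually. intros i Hi. unfold u.
        destruct (excluded_middle_informative (A i t)); auto. exfalso; apply (Hd i n0 t); auto; lia. }
      rewrite Hs in Hi. exact Hi.
    + destruct (excluded_middle_informative (exists n, A n t)) as [C|_]; [contradiction|].
      replace 0 with (rsum (fun n => if excluded_middle_informative (A n t) then 1 else 0) 0) by auto.
      apply inf_sum_of_eventually. intros i _. destruct (excluded_middle_informative (A i t)); auto.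
      exfalso; eauto.
Qed.

Definition mix (a : R) (mu nu : (R -> Prop) -> R) (A : R -> Prop) : R := (1 - a) * mu A + a * nu A.

Lemma inf_sum_lin u v l1 l2 a b : infinite_sum u l1 -> infinite_sum v l2 ->
  infinite_sum (fun n => a * u n + b * v n) (a * l1 + b * l2).
Proof.
  intros H1 H2.
  assert (Hc : forall c, Un_cv (fun _ : nat => c) c).
  { intros c eps He. exists 0%nat. intros. unfold Rdist. rewrite Rminus_diag, Rabs_R0; lra. }
  pose proof (CV_plus _ _ _ _ (CV_mult _ _ _ _ (Hc a) H1) (CV_mult _ _ _ _ (Hc b) H2)) as H.
  intros eps He. destruct (H eps He) as [N HN]. exists N. intros n Hn.
  rewrite plus_sum.
  replace (sum_f_R0 (fun i => a * u i) n) with (a * sum_f_R0 u n).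
  replace (sum_f_R0 (fun i => b * v i) n) with (b * sum_f_R0 v n).
  apply HN; auto.
  all: rewrite scal_sum; apply sum_eq; intros; ring.
Qed.

Lemma mix_prior a mu nu : 0 <= a <= 1 -> prior mu -> prior nu -> prior (mix a mu nu).
Proof.
  intros Ha [m1 [m2 [m3 m4]]] [n1 [n2 [n3 n4]]]. unfold mix. split; [|split; [|split]].
  - intros A HA. specialize (m1 A HA); specialize (n1 A HA). nra.
  - rewrite m2, n2; ring.
  - rewrite m3, n3; ring.
  - intros A HA Hd. apply inf_sum_lin; auto.
Qed.

Lemma RS_mix a mu nu f N : RS (mix a mu nu) f N = (1 - a) * RS mu f N + a * RS nu f N.
Proof. unfold RS, mix. rewrite <- !rsum_scal, <- rsum_plus. apply rsum_ext; intros; ring. Qed.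

Lemma Ev_mix a mu nu f r s : Ev mu f r -> Ev nu f s -> Ev (mix a mu nu) f ((1 - a) * r + a * s).
Proof.
  intros H1 H2 eps He.
  pose proof (Ev_scal mu (1-a) f r H1 (eps/2) ltac:(lra)) as [N1 HN1].
  pose proof (Ev_scal nu a f s H2 (eps/2) ltac:(lra)) as [N2 HN2].
  exists (Nat.max N1 N2). intros N HN. rewrite RS_mix.
  specialize (HN1 N ltac:(lia)). specialize (HN2 N ltac:(lia)). rewrite RS_scal in HN1, HN2.
  replace ((1 - a) * RS mu f N + a * RS nu f N - ((1 - a) * r + a * s)) with
    (((1 - a) * RS mu f N - (1-a) * r) + (a * RS nu f N - a * s)) by ring.
  eapply Rle_trans; [apply Rabs_triang|]. lra.
Qed.

Lemma Ev_dirac t f : 0 <= t <= 1 -> UC f -> Ev (dirac t) f (f t).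
Proof.
  intros Ht Hu eps He. destruct (Hu eps He) as [d [Hd Hd']].
  destruct (mesh_small d Hd) as [N0 [HN0 HN0']]. exists N0. intros N HN.
  apply RS_close; [apply dirac_prior; auto| lia |].
  intros k Hk Hne. unfold dirac in Hne. destruct (excluded_middle_informative (cell N k t)) as [Hc|]; [|lra].
  pose proof (cell_close N k t ltac:(lia) Hc). specialize (HN0' N HN).
  left. rewrite Rabs_minus_sym. apply Hd'; [exact Ht| apply pt_unit; lia | rewrite Rabs_pos_eq; lra].
Qed.


Lemma ln_le_x1 x : 0 < x -> ln x <= x - 1.
Proof. intro H. pose proof (exp_ineq1_le (ln x)). rewrite exp_ln in H0; lra. Qed.

Lemma ln_le' x y : 0 < x -> x <= y -> ln x <= ln y.
Proof. intros H1 [H2|H2]; [left; apply ln_increasing; auto|subst; lra]. Qed.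

Lemma xlogx_0 : xlogx 0 = 0.
Proof. unfold xlogx; destruct (Req_EM_T 0 0); lra. Qed.
Lemma xlogx_pos x : x <> 0 -> xlogx x = x * ln x.
Proof. unfold xlogx; destruct (Req_EM_T x 0); auto; contradiction. Qed.
Lemma xlogx_1 : xlogx 1 = 0.
Proof. rewrite xlogx_pos, ln_1 by lra. ring. Qed.

Lemma cont_from_eps f x :
  (forall eps, 0 < eps -> exists d, 0 < d /\ forall y, Rabs (y - x) < d -> Rabs (f y - f x) < eps) ->
  continuity_pt f x.
Proof.
  intros H eps He. destruct (H eps He) as [d [Hd H']]. exists d. split; auto.
  intros y [_ Hy]. apply H'. exact Hy.
Qed.

Lemma cont_to_eps f x : continuity_pt f x ->
  forall eps, 0 < eps -> exists d, 0 < d /\ forall y, Rabs (y - x) < d -> Rabs (f y - f x) < eps.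
Proof.
  intros H eps He. destruct (H eps He) as [d [Hd H']]. exists d. split; auto.
  intros y Hy. destruct (Req_dec y x) as [->|Hne].
  - rewrite Rminus_diag, Rabs_R0; auto.
  - apply (H' y). split; [split; [exact Logic.I| auto]| exact Hy].
Qed.

Lemma cont_local f g x r : 0 < r -> (forall y, Rabs (y - x) < r -> f y = g y) -> continuity_pt g x ->
  continuity_pt f x.
Proof.
  intros Hr Hfg Hg. apply cont_from_eps. intros eps He.
  destruct (cont_to_eps g x Hg eps He) as [d [Hd H]].
  exists (Rmin d r). split; [apply Rmin_pos; auto|]. intros y Hy.
  pose proof (Rmin_l d r); pose proof (Rmin_r d r).
  rewrite !Hfg; [apply H; lra | rewrite Rminus_diag, Rabs_R0; auto | lra].
Qed.

Lemma xlogx_small y : 0 < y <= 1 -> Rabs (y * ln y) <= 2 * sqrt y.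
Proof.
  intros Hy. assert (Hs : 0 < sqrt y) by (apply sqrt_lt_R0; lra).
  assert (Hss : sqrt y * sqrt y = y) by (apply sqrt_sqrt; lra).
  assert (Hln : ln y <= 0) by (rewrite <- ln_1; apply ln_le'; lra).
  rewrite Rabs_left1 by nra.
  (* -y ln y = 2 y ln (1/sqrt y) <= 2 y (1/sqrt y - 1) <= 2 sqrt y *)
  assert (E : ln y = 2 * ln (sqrt y)).
  { rewrite <- Hss at 1. rewrite ln_mult by auto. ring. }
  pose proof (ln_le_x1 (/ sqrt y) ltac:(apply Rinv_0_lt_compat; auto)).
  rewrite ln_Rinv in H by auto.
  assert (y * / sqrt y = sqrt y) by (rewrite <- Hss at 1; field; lra).
  rewrite E. nra.
Qed.

Lemma xlogx_neg y : y < 0 -> xlogx y = 0.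
Proof.
  intro H. rewrite xlogx_pos by lra. unfold ln. case (Rlt_dec 0 y); intros; [exfalso; lra|ring].
Qed.

Lemma cont_id x : continuity_pt (fun y => y) x.
Proof. exact (derivable_continuous_pt _ _ (derivable_pt_id x)). Qed.

Lemma cont_ln x : 0 < x -> continuity_pt ln x.
Proof.
  intro H. apply derivable_continuous_pt. exists (/ x). apply derivable_pt_lim_ln; auto.
Qed.

Lemma cont_xlogx x : continuity_pt xlogx x.
Proof.
  destruct (Rtotal_order x 0) as [Hn|[H0|Hp]].
  - apply cont_local with (fun _ => 0) (- x); [lra| |apply continuity_pt_const; intros ? ?; auto].
    intros y Hy. apply xlogx_neg. apply Rabs_def2 in Hy. lra.
  - subst. apply cont_from_eps. intros eps He.
    exists (Rmin 1 ((eps/2) * (eps/2))). split; [apply Rmin_pos; nra|].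
    intros y Hy. rewrite xlogx_0, Rminus_0_r in *.
    pose proof (Rmin_l 1 ((eps/2)*(eps/2))); pose proof (Rmin_r 1 ((eps/2)*(eps/2))).
    destruct (Rtotal_order y 0) as [Hn|[->|Hp]].
    + rewrite xlogx_neg, Rabs_R0; auto.
    + rewrite xlogx_0, Rabs_R0; auto.
    + rewrite xlogx_pos by lra. rewrite Rabs_pos_eq in Hy by lra.
      eapply Rle_lt_trans; [apply xlogx_small; lra|].
      assert (sqrt y < eps / 2).
      { rewrite <- (sqrt_Rsqr (eps/2)) by lra. apply sqrt_lt_1; unfold Rsqr; nra. }
      lra.
  - apply cont_local with (fun y => y * ln y) x; [lra| |].
    + intros y Hy. apply xlogx_pos. apply Rabs_def2 in Hy. lra.
    + apply (continuity_pt_mult (fun y => y) ln); [apply cont_id| apply cont_ln; auto].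
Qed.

Lemma cont_S x : continuity_pt S x.
Proof.
  unfold S. apply (continuity_pt_minus (fun t => - xlogx t) (fun t => xlogx (1 - t))).
  - apply (continuity_pt_opp xlogx). apply cont_xlogx.
  - apply (continuity_pt_comp (fun t => 1 - t) xlogx).
    + apply (continuity_pt_minus (fun _ => 1) (fun t => t)); [apply continuity_pt_const; intros ? ?; auto|apply cont_id].
    + apply cont_xlogx.
Qed.

Lemma UC_S : UC S.
Proof. apply UC_cont. intros; apply cont_S. Qed.
Lemma UC_id : UC (fun x => x).
Proof. apply UC_cont. intros; apply cont_id. Qed.
Lemma UC_sq : UC (fun x => x * x).
Proof. apply UC_cont. intros; apply (continuity_pt_mult (fun y => y) (fun y => y)); apply cont_id. Qed.


Lemma div_gt_iff a p x : 0 < p -> (a < p * x <-> a / p < x).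
Proof.
  intro Hp. split; intro H.
  - apply Rmult_lt_reg_r with p; auto. unfold Rdiv. rewrite Rmult_assoc, Rinv_l by lra. lra.
  - apply Rmult_lt_compat_r with (r := p) in H; [|lra]. unfold Rdiv in H.
    rewrite Rmult_assoc, Rinv_l in H by lra. lra.
Qed.

Lemma borel_relopen (P : R -> Prop) :
  (forall x, 0 <= x <= 1 -> P x -> exists d, 0 < d /\ forall y, 0 <= y <= 1 -> Rabs (y - x) < d -> P y) ->
  borel (fun x => 0 <= x <= 1 /\ P x).
Proof.
  intro HP.
  set (J := fun (k i : nat) (x : R) => (INR i - 1) / INR (Datatypes.S k) < x < (INR i + 1) / INR (Datatypes.S k)).
  set (cond := fun k i => forall y, 0 <= y <= 1 -> J k i y -> P y).
  set (W := fun x => exists k, exists i, (if excluded_middle_informative (cond k i) then J k i else fun _ => False) x).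
  apply borel_ext with (fun x => unit_interval x /\ W x).
  - intro x. unfold unit_interval. split.
    + intros [Hx [k [i Hw]]]. split; auto.
      destruct (excluded_middle_informative (cond k i)) as [Hc|]; [|contradiction]. apply Hc; auto.
    + intros [Hx Px]. split; auto. destruct (HP x Hx Px) as [d [Hd Hd']].
      destruct (mesh_small (d/2) ltac:(lra)) as [N [HN HN']]. specialize (HN' N (le_n _)).
      destruct N as [|k]; [lia|].
      destruct (cell_cover (Datatypes.S k) x HN Hx) as [i [_ [_ [Hi1 Hi2]]]].
      pose proof (INRpos _ HN) as Hpos.
      exists k, i. destruct (excluded_middle_informative (cond k i)) as [Hc|Hc].
      * unfold J. split; [apply div_gt_iff|apply div_lt_iff]; auto; lra.
      * exfalso. apply Hc. intros y Hy [Hy1 Hy2]. apply Hd'; auto.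
        apply div_gt_iff in Hy1; auto. apply div_lt_iff in Hy2; auto.
        assert (INR (Datatypes.S k) * (y - x) < 2) by lra.
        assert (- 2 < INR (Datatypes.S k) * (y - x)) by lra.
        assert (y - x < 2 / INR (Datatypes.S k)) by (apply div_lt_iff; auto).
        assert (-2 / INR (Datatypes.S k) < y - x) by (apply div_gt_iff; auto).
        assert (2 / INR (Datatypes.S k) <= d) by (unfold Rdiv; lra).
        replace (-2 / INR (Datatypes.S k)) with (- (2 / INR (Datatypes.S k))) in H2 by (unfold Rdiv; ring).
        apply Rabs_def1; lra.
  - apply borel_inter; [apply borel_unit|]. apply borel_cunion; intro k. apply borel_cunion; intro i.
    destruct (excluded_middle_informative (cond k i)); [apply borel_interval|apply borel_F].
Qed.

Lemma null_lemma mu g : prior mu -> UC g -> (forall x, 0 <= x <= 1 -> 0 <= g x) -> Ev mu g 0 ->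
  mu (fun x => 0 <= x <= 1 /\ 0 < g x) = 0.
Proof.
  intros Hp Hu Hg He.
  set (V := fun (n : nat) x => 0 <= x <= 1 /\ / (INR n + 1) < g x).
  assert (HVb : forall n, borel (V n)).
  { intro n. apply borel_relopen. intros x Hx Hgx.
    destruct (Hu (g x - / (INR n + 1)) ltac:(lra)) as [d [Hd Hd']].
    exists d; split; auto. intros y Hy Hyx. specialize (Hd' y x Hy Hx Hyx). apply Rabs_def2 in Hd'. lra. }
  assert (Hpos : forall n, 0 < / (INR n + 1)).
  { intro n. apply Rinv_0_lt_compat. pose proof (pos_INR n); lra. }
  assert (HV0 : forall n, mu (V n) = 0).
  { intro n. pose proof (int_eq mu g 0 Hp Hg Hu He) as Hi.
    assert (L : lower_sum mu (fun x => Fin (g x)) (rsum (fun _ => mu (V n) * / (INR n + 1)) 1)).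
    { exists 1%nat, (fun _ => V n), (fun _ => / (INR n + 1)).
      refine (conj _ (conj _ (conj _ (conj _ (conj _ _))))); auto.
      - intros i x _ [Hx _]; exact Hx.
      - intros i j x Hi0 Hj0 Hij; lia.
      - intros; left; auto.
      - intros i x _ [_ Hx]; simpl; lra. }
    pose proof (int_ge_lower _ _ _ L) as H. rewrite Hi in H. simpl in H.
    pose proof (mu_nonneg mu _ Hp (HVb n)). specialize (Hpos n). nra. }
  assert (Vmono : forall m n, (m <= n)%nat -> forall x, V m x -> V n x).
  { intros m n Hmn x [Hx Hgx]. split; auto. apply le_INR in Hmn.
    assert (/ (INR n + 1) <= / (INR m + 1)). { apply Rinv_le_contravar; auto. pose proof (pos_INR m); lra. lra. }
    lra. }
  set (D := fun n x => match n with O => V 0%nat x | Datatypes.S m => V n x /\ ~ V m x end).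
  assert (HDb : forall n, borel (D n)).
  { intros [|m]; [exact (HVb 0%nat)| apply (borel_inter (V (Datatypes.S m)) (fun x => ~ V m x)); [apply HVb| apply borel_compl, HVb]]. }
  assert (HD0 : forall n, mu (D n) = 0).
  { intro n. apply Rle_antisym; [|apply mu_nonneg; auto]. rewrite <- (HV0 n).
    apply mu_mono; auto. destruct n; simpl; tauto. }
  assert (HDd : forall m n x, m <> n -> D m x -> D n x -> False).
  { assert (forall m n x, (m < n)%nat -> D m x -> D n x -> False).
    { intros m n x Hmn Hm Hn. destruct n as [|n]; [lia|]. destruct Hn as [_ Hn]. apply Hn.
      apply (Vmono m); [lia|]. destruct m; simpl in Hm; tauto. }
    intros m n x Hmn H1 H2. destruct (Nat.lt_total m n) as [Hl|[He'|Hl]].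
    - apply (H m n x); auto.
    - apply Hmn. auto.
    - apply (H n m x); auto. }
  pose proof Hp as [_ [_ [_ Hc]]]. specialize (Hc D HDb HDd).
  replace (fun x => exists n, D n x) with (fun x => 0 <= x <= 1 /\ 0 < g x) in Hc.
  - apply (uniqueness_sum (fun n => mu (D n))); auto.
    replace 0 with (rsum (fun n => mu (D n)) 0) by auto. apply inf_sum_of_eventually. auto.
  - apply set_ext; intro x; split.
    + intros [Hx Hgx].
      assert (Hex : exists n, V n x).
      { destruct (archimed (/ g x)) as [Ha _].
        exists (Z.to_nat (up (/ g x))). split; auto.
        assert (0 < / g x) by (apply Rinv_0_lt_compat; auto).
        assert (Hz : (0 <= up (/ g x))%Z) by (apply le_IZR; lra).
        rewrite INR_IZR_INZ, Z2Nat.id by auto.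
        assert (Hq : / (IZR (up (/ g x)) + 1) < / / g x) by (apply Rinv_lt_contravar; nra).
        rewrite Rinv_inv in Hq. exact Hq. }
      destruct Hex as [n Hn]. clear -Hn.
      induction n as [|n IH].
      * exists 0%nat; auto.
      * destruct (classic (V n x)) as [Hv|Hv]; auto. exists (Datatypes.S n). simpl. auto.
    + intros [n Hn]. assert (Hv : exists m, V m x) by (destruct n; [exists 0%nat; exact Hn| exists (Datatypes.S n); apply Hn]).
      destruct Hv as [m [Hx Hgx]]. split; auto. pose proof (Hpos m); lra.
Qed.


Lemma ln_inv1 u : 0 < u -> ln (1 / u) = - ln u.
Proof. intro H. unfold Rdiv. rewrite Rmult_1_l. apply ln_Rinv; auto. Qed.

Lemma gibbs1 w W u : 0 <= w -> 0 < W -> 0 < u ->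
  w * ln (1 / u) >= - (xlogx w - w * ln W) + (w - W * u).
Proof.
  intros Hw HW Hu. rewrite ln_inv1 by auto.
  destruct (Req_dec w 0) as [->|Hne].
  - rewrite xlogx_0. nra.
  - rewrite xlogx_pos by auto. assert (Hwp : 0 < w) by lra.
    pose proof (ln_le_x1 (W * u / w) ltac:(apply Rdiv_lt_0_compat; nra)).
    unfold Rdiv in H. rewrite !ln_mult, ln_Rinv in H by (try apply Rinv_0_lt_compat; nra).
    assert (w * (W * u * / w) = W * u) by (field; lra).
    nra.
Qed.

Lemma gibbs w1 w2 u v : 0 <= w1 -> 0 <= w2 -> 0 < u -> 0 < v ->
  w1 * ln (1 / u) + w2 * ln (1 / v) >=
  - (xlogx w1 + xlogx w2 - xlogx (w1 + w2)) - (w1 + w2) * (u + v - 1).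
Proof.
  intros H1 H2 Hu Hv.
  destruct (Req_dec (w1 + w2) 0) as [E|E].
  - assert (w1 = 0) by lra. assert (w2 = 0) by lra. subst. rewrite Rplus_0_r, xlogx_0. lra.
  - assert (HW : 0 < w1 + w2) by lra.
    pose proof (gibbs1 w1 (w1 + w2) u H1 HW Hu). pose proof (gibbs1 w2 (w1 + w2) v H2 HW Hv).
    rewrite (xlogx_pos (w1 + w2)) by lra. nra.
Qed.

Lemma gibbs_eq w1 w2 : 0 < w1 -> 0 < w2 ->
  w1 * ln (1 / (w1 / (w1 + w2))) + w2 * ln (1 / (w2 / (w1 + w2))) =
  - (xlogx w1 + xlogx w2 - xlogx (w1 + w2)).
Proof.
  intros H1 H2. rewrite !xlogx_pos by lra.
  rewrite !ln_inv1 by (apply Rdiv_lt_0_compat; lra).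
  unfold Rdiv. rewrite !ln_mult, !ln_Rinv by (try apply Rinv_0_lt_compat; lra). ring.
Qed.

Lemma xl_identity t : 0 <= t <= 1 ->
  xlogx (t * t) + 2 * xlogx (t * (1 - t)) + xlogx ((1 - t) * (1 - t)) - xlogx t - xlogx (1 - t)
  = xlogx t + xlogx (1 - t).
Proof.
  intro Ht. destruct (Req_dec t 0) as [->|H0].
  { rewrite !Rmult_0_l, Rminus_0_r, Rmult_1_l, xlogx_0, xlogx_1. ring. }
  destruct (Req_dec t 1) as [->|H1].
  { rewrite Rminus_diag, !Rmult_0_r, Rmult_1_l, xlogx_0, xlogx_1. ring. }
  assert (0 < t) by lra. assert (0 < 1 - t) by lra.
  rewrite !xlogx_pos by nra. rewrite !ln_mult by lra. ring.
Qed.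

Definition Lq (a1 b1 a0 b0 t : R) : R := t * t * a1 + t * (1 - t) * (b1 + a0) + (1 - t) * (1 - t) * b0.
Definition Rfun (a1 b1 a0 b0 t : R) : R := - S t + Lq a1 b1 a0 b0 t.

Lemma Rfun_lb u1 v1 u0 v0 eta t : 0 < u1 -> 0 < v1 -> 0 < u0 -> 0 < v0 ->
  u1 + v1 <= 1 + eta -> u0 + v0 <= 1 + eta -> 0 <= t <= 1 ->
  Rfun (ln (1/u1)) (ln (1/v1)) (ln (1/u0)) (ln (1/v0)) t >= - eta.
Proof.
  intros. unfold Rfun, Lq, S.
  pose proof (gibbs (t * t) (t * (1 - t)) u1 v1 ltac:(nra) ltac:(nra) H H0) as G1.
  pose proof (gibbs (t * (1 - t)) ((1 - t) * (1 - t)) u0 v0 ltac:(nra) ltac:(nra) H1 H2) as G2.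
  replace (t * t + t * (1 - t)) with t in G1 by ring.
  replace (t * (1 - t) + (1 - t) * (1 - t)) with (1 - t) in G2 by ring.
  pose proof (xl_identity t H5). nra.
Qed.

Definition Gf (p q : R) : R :=
  - (xlogx q + 2 * xlogx (p - q) + xlogx (1 - 2 * p + q) - xlogx p - xlogx (1 - p)).

Lemma mom_lb p q u1 v1 u0 v0 eta : 0 <= q -> 0 <= p - q -> 0 <= 1 - 2 * p + q ->
  0 < u1 -> 0 < v1 -> 0 < u0 -> 0 < v0 -> u1 + v1 <= 1 + eta -> u0 + v0 <= 1 + eta ->
  q * ln (1/u1) + (p - q) * (ln (1/v1) + ln (1/u0)) + (1 - 2 * p + q) * ln (1/v0) >= Gf p q - eta.
Proof.
  intros. unfold Gf.
  pose proof (gibbs q (p - q) u1 v1 H H0 H2 H3) as G1.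
  pose proof (gibbs (p - q) (1 - 2 * p + q) u0 v0 H0 H1 H4 H5) as G2.
  replace (q + (p - q)) with p in G1 by ring.
  replace (p - q + (1 - 2 * p + q)) with (1 - p) in G2 by ring.
  nra.
Qed.

Lemma mom_eq p q : 0 < q -> 0 < p - q -> 0 < 1 - 2 * p + q ->
  q * ln (1 / (q / p)) + (p - q) * (ln (1 / ((p - q) / p)) + ln (1 / ((p - q) / (1 - p))))
  + (1 - 2 * p + q) * ln (1 / ((1 - 2 * p + q) / (1 - p))) = Gf p q.
Proof.
  intros. unfold Gf.
  pose proof (gibbs_eq q (p - q) H H0) as G1.
  pose proof (gibbs_eq (p - q) (1 - 2 * p + q) H0 H1) as G2.
  replace (q + (p - q)) with p in G1 by ring.
  replace (p - q + (1 - 2 * p + q)) with (1 - p) in G2 by ring.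
  lra.
Qed.

Lemma UC_ext f g : (forall x, 0 <= x <= 1 -> f x = g x) -> UC f -> UC g.
Proof.
  intros E H eps He. destruct (H eps He) as [d [Hd H']]. exists d; split; auto.
  intros x y Hx Hy Hxy. rewrite <- !E by auto. auto.
Qed.

Lemma Rfun_lin a1 b1 a0 b0 t : Rfun a1 b1 a0 b0 t =
  (-1) * S t + ((a1 - (b1 + a0) + b0) * (t * t) + (((b1 + a0) - 2 * b0) * t + b0)).
Proof. unfold Rfun, Lq. ring. Qed.

Lemma UC_Rfun a1 b1 a0 b0 : UC (Rfun a1 b1 a0 b0).
Proof.
  apply UC_ext with (fun t => (-1) * S t + ((a1 - (b1 + a0) + b0) * (t * t) + (((b1 + a0) - 2 * b0) * t + b0))).
  { intros; rewrite Rfun_lin; auto. }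
  apply UC_plus; [apply UC_scal, UC_S|]. apply UC_plus; [apply UC_scal, UC_sq|].
  apply UC_plus; [apply UC_scal, UC_id| apply UC_const].
Qed.

Lemma Ev_Rfun mu a1 b1 a0 b0 p q s : prior mu -> Ev mu (fun t => t) p -> Ev mu (fun t => t * t) q -> Ev mu S s ->
  Ev mu (Rfun a1 b1 a0 b0) (- s + (q * a1 + (p - q) * (b1 + a0) + (1 - 2 * p + q) * b0)).
Proof.
  intros Hp Hid Hsq HS.
  apply Ev_ext with (fun t => (-1) * S t + ((a1 - (b1 + a0) + b0) * (t * t) + (((b1 + a0) - 2 * b0) * t + b0))).
  { intros; rewrite Rfun_lin; auto. }
  replace (- s + (q * a1 + (p - q) * (b1 + a0) + (1 - 2 * p + q) * b0)) with
    ((-1) * s + ((a1 - (b1 + a0) + b0) * q + (((b1 + a0) - 2 * b0) * p + b0))) by ring.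
  apply Ev_plus; [apply Ev_scal; auto|]. apply Ev_plus; [apply Ev_scal; auto|].
  apply Ev_plus; [apply Ev_scal; auto| apply Ev_const; auto].
Qed.

Lemma clog_fin c d : 0 < d -> clog c d = Fin (c * ln (1 / d)).
Proof.
  intro H. unfold clog. destruct (Req_EM_T c 0) as [->|]; [f_equal; ring|].
  destruct (Req_EM_T d 0); [lra|auto].
Qed.

Lemma risk_fin d0 d1 t : 0 < d0 < 1 -> 0 < d1 < 1 ->
  risk d0 d1 t = Fin (Rfun (ln (1/d1)) (ln (1/(1-d1))) (ln (1/d0)) (ln (1/(1-d0))) t).
Proof.
  intros H0 H1. unfold risk. rewrite !clog_fin by lra. simpl. f_equal. unfold Rfun, Lq. ring.
Qed.

Lemma clog_lb c d eta : 0 <= c -> 0 <= d -> 0 < eta -> ele (Fin (c * ln (1 / Rmax d eta))) (clog c d).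
Proof.
  intros Hc Hd He. unfold clog. destruct (Req_EM_T c 0) as [->|Hc0]; [simpl; lra|].
  destruct (Req_EM_T d 0) as [->|Hd0]; simpl; auto.
  apply Rmult_le_compat_l; auto. rewrite !ln_inv1; [| lra | ].
  - apply Ropp_le_contravar. apply ln_le'; [lra| apply Rmax_l].
  - pose proof (Rmax_r d eta); lra.
Qed.

Lemma eadd_mono a b a' b' : ele a a' -> ele b b' -> ele (eadd a b) (eadd a' b').
Proof. destruct a, b, a', b'; simpl; auto; try lra; tauto. Qed.

Definition cf (d eta : R) : R := ln (1 / Rmax d eta).
Definition Feta (d0 d1 eta : R) : R -> R :=
  Rfun (cf d1 eta) (cf (1 - d1) eta) (cf d0 eta) (cf (1 - d0) eta).

Lemma risk_lb d0 d1 eta t : 0 <= d0 <= 1 -> 0 <= d1 <= 1 -> 0 < eta -> 0 <= t <= 1 ->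
  ele (Fin (Feta d0 d1 eta t)) (risk d0 d1 t).
Proof.
  intros H0 H1 He Ht. unfold Feta, Rfun, Lq, risk, cf.
  replace (- S t + (t * t * ln (1 / Rmax d1 eta) + t * (1 - t) * (ln (1 / Rmax (1 - d1) eta) + ln (1 / Rmax d0 eta))
     + (1 - t) * (1 - t) * ln (1 / Rmax (1 - d0) eta))) with
   (- S t + (t ^ 2 * ln (1 / Rmax d1 eta) + (t * (1 - t) * ln (1 / Rmax (1 - d1) eta) +
     (t * (1 - t) * ln (1 / Rmax d0 eta) + (1 - t) ^ 2 * ln (1 / Rmax (1 - d0) eta))))) by ring.
  change (Fin (- S t + (t ^ 2 * ln (1 / Rmax d1 eta) + (t * (1 - t) * ln (1 / Rmax (1 - d1) eta) +
     (t * (1 - t) * ln (1 / Rmax d0 eta) + (1 - t) ^ 2 * ln (1 / Rmax (1 - d0) eta))))))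
   with (eadd (Fin (- S t)) (eadd (Fin (t ^ 2 * ln (1 / Rmax d1 eta)))
          (eadd (Fin (t * (1 - t) * ln (1 / Rmax (1 - d1) eta)))
           (eadd (Fin (t * (1 - t) * ln (1 / Rmax d0 eta))) (Fin ((1 - t) ^ 2 * ln (1 / Rmax (1 - d0) eta))))))).
  apply eadd_mono; [apply ele_refl|].
  apply eadd_mono; [apply clog_lb; try lra; apply pow2_ge_0|].
  apply eadd_mono; [apply clog_lb; try lra; nra|].
  apply eadd_mono; apply clog_lb; try lra; try nra.
Qed.

Lemma rmax_sum d eta : 0 <= d <= 1 -> 0 < eta <= 1/2 -> Rmax d eta + Rmax (1 - d) eta <= 1 + eta.
Proof. intros. unfold Rmax. destruct (Rle_dec d eta), (Rle_dec (1 - d) eta); lra. Qed.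

Lemma rmax_pos d eta : 0 < eta -> 0 < Rmax d eta.
Proof. intros. pose proof (Rmax_r d eta); lra. Qed.

Lemma Feta_lb d0 d1 eta t : 0 <= d0 <= 1 -> 0 <= d1 <= 1 -> 0 < eta <= 1/2 -> 0 <= t <= 1 ->
  Feta d0 d1 eta t >= - eta.
Proof.
  intros. unfold Feta, cf. apply Rfun_lb; auto; try apply rmax_pos; try lra; apply rmax_sum; lra.
Qed.

Lemma fin_ge_of_all (v a : R) : (forall eta, 0 < eta <= 1/2 -> a - eta <= v) -> a <= v.
Proof.
  intro H. apply Rnot_lt_le. intro Hlt.
  specialize (H (Rmin (1/2) ((a - v) / 2)) ltac:(split; [apply Rmin_pos; lra| apply Rmin_l])).
  pose proof (Rmin_r (1/2) ((a - v) / 2)). lra.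
Qed.

Lemma risk_nonneg d0 d1 t : 0 <= d0 <= 1 -> 0 <= d1 <= 1 -> 0 <= t <= 1 -> ele (Fin 0) (risk d0 d1 t).
Proof.
  intros. destruct (risk d0 d1 t) as [v|] eqn:E; simpl; auto.
  apply fin_ge_of_all. intros eta He. pose proof (risk_lb d0 d1 eta t H H0 ltac:(lra) H1).
  rewrite E in H2. simpl in H2. pose proof (Feta_lb d0 d1 eta t H H0 He H1). lra.
Qed.

Lemma Jlow nu p q s d0 d1 : prior nu -> Ev nu (fun t => t) p -> Ev nu (fun t => t * t) q -> Ev nu S s ->
  0 <= d0 <= 1 -> 0 <= d1 <= 1 -> ele (Fin (Gf p q - s)) (integral nu (risk d0 d1)).
Proof.
  intros Hp Hid Hsq HS Hd0 Hd1.
  assert (Hq : 0 <= q) by (apply (Ev_mono nu (fun _ => 0) (fun t => t * t)) with (r := 0) (s := q); auto;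
    [intros; nra| apply Ev_const; auto]).
  assert (Hpq : 0 <= p - q).
  { assert (Ev nu (fun t => t + (-1) * (t * t)) (p + (-1) * q)) by (apply Ev_plus; auto; apply Ev_scal; auto).
    assert (0 <= p + (-1) * q); [|lra].
    apply (Ev_mono nu (fun _ => 0) (fun t => t + (-1) * (t * t))); auto; [intros; nra| apply Ev_const; auto]. }
  assert (Hr : 0 <= 1 - 2 * p + q).
  { assert (Ev nu (fun t => 1 + ((-2) * t + t * t)) (1 + ((-2) * p + q))) by
      (apply Ev_plus; [apply Ev_const; auto| apply Ev_plus; auto; apply Ev_scal; auto]).
    assert (0 <= 1 + ((-2) * p + q)); [|lra].
    apply (Ev_mono nu (fun _ => 0) (fun t => 1 + ((-2) * t + t * t))); auto; [intros; nra| apply Ev_const; auto]. }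
  destruct (integral nu (risk d0 d1)) as [v|] eqn:Ei; simpl; auto.
  apply fin_ge_of_all. intros eta He.
  set (F := Feta d0 d1 eta).
  set (Fp := fun t => Rmax (F t) 0).
  assert (HUF : UC F) by apply UC_Rfun.
  destruct (Ev_exists nu Fp Hp (UC_max0 _ HUF)) as [rp Hrp].
  pose proof (Ev_Rfun nu (cf d1 eta) (cf (1 - d1) eta) (cf d0 eta) (cf (1 - d0) eta) p q s Hp Hid Hsq HS) as HrF.
  fold (Feta d0 d1 eta) in HrF. fold F in HrF.
  assert (Hmono := Ev_mono nu F Fp _ _ Hp ltac:(intros; apply Rmax_l) HrF Hrp).
  assert (Hint := int_eq nu Fp rp Hp ltac:(intros; apply Rmax_r) (UC_max0 _ HUF) Hrp).
  assert (Hle : ele (integral nu (fun x => Fin (Fp x))) (integral nu (risk d0 d1))).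
  { apply int_mono. intros x c Hx Hc Hcx. simpl in Hcx. unfold Fp in Hcx.
    destruct (Rle_dec 0 (F x)).
    - rewrite Rmax_left in Hcx by lra. eapply ele_trans; [|apply (risk_lb d0 d1 eta x); auto; lra].
      simpl; auto.
    - rewrite Rmax_right in Hcx by lra. replace c with 0 by lra. apply risk_nonneg; auto. }
  rewrite Hint, Ei in Hle. simpl in Hle.
  pose proof (mom_lb p q (Rmax d1 eta) (Rmax (1 - d1) eta) (Rmax d0 eta) (Rmax (1 - d0) eta) eta
     Hq Hpq Hr ltac:(apply rmax_pos; lra) ltac:(apply rmax_pos; lra) ltac:(apply rmax_pos; lra)
     ltac:(apply rmax_pos; lra) ltac:(apply rmax_sum; lra) ltac:(apply rmax_sum; lra)).
  unfold cf in Hmono. lra.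
Qed.

From Coquelicot Require Import Coquelicot.
Open Scope R_scope.


Definition hfun (c0 A B C t : R) : R :=
  c0 - t * ln t - (1 - t) * ln (1 - t) - (t * t * A + t * (1 - t) * B + (1 - t) * (1 - t) * C).
Definition hder (A B C t : R) : R := ln (1 - t) - ln t - 2 * A * t - B * (1 - 2 * t) + 2 * C * (1 - t).
Definition hder2 (A B C t : R) : R := - / (1 - t) - / t - 2 * A + 2 * B - 2 * C.

Lemma hfun_der c0 A B C t : 0 < t < 1 -> derivable_pt_lim (hfun c0 A B C) t (hder A B C t).
Proof.
  intro Ht. apply is_derive_Reals. unfold hfun, hder. auto_derive.
  - lra.
  - replace (1 + - t) with (1 - t) by ring. field. lra.
Qed.

Lemma hder_der A B C t : 0 < t < 1 -> derivable_pt_lim (hder A B C) t (hder2 A B C t).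
Proof.
  intro Ht. apply is_derive_Reals. unfold hder, hder2. auto_derive.
  - lra.
  - replace (1 + - t) with (1 - t) by ring. field. lra.
Qed.

Lemma fermat f z l : 0 < z < 1 -> (forall x, 0 < x < 1 -> f z <= f x) -> derivable_pt_lim f z l -> l = 0.
Proof.
  intros Hz Hmin Hd. destruct (Rtotal_order l 0) as [Hl|[Hl|Hl]]; auto; exfalso.
  - destruct (Hd (- l / 2) ltac:(lra)) as [d Hd'].
    set (hh := Rmin (d / 2) ((1 - z) / 2)).
    assert (0 < hh) by (apply Rmin_pos; pose proof (cond_pos d); lra).
    assert (hh <= d/2) by apply Rmin_l. assert (hh <= (1-z)/2) by apply Rmin_r. pose proof (cond_pos d).
    specialize (Hd' hh ltac:(intro; lra) ltac:(rewrite Rabs_pos_eq; lra)).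
    specialize (Hmin (z + hh) ltac:(lra)).
    assert (0 <= (f (z + hh) - f z) / hh) by (apply Rdiv_le_0_compat; lra).
    apply Rabs_def2 in Hd'. lra.
  - destruct (Hd (l / 2) ltac:(lra)) as [d Hd'].
    set (hh := Rmin (d / 2) (z / 2)).
    assert (0 < hh) by (apply Rmin_pos; pose proof (cond_pos d); lra).
    assert (hh <= d/2) by apply Rmin_l. assert (hh <= z/2) by apply Rmin_r. pose proof (cond_pos d).
    specialize (Hd' (- hh) ltac:(intro; lra) ltac:(rewrite Rabs_Ropp, Rabs_pos_eq; lra)).
    specialize (Hmin (z + - hh) ltac:(lra)).
    assert ((f (z + - hh) - f z) / - hh <= 0).
    { unfold Rdiv. rewrite <- Ropp_inv_permute by lra.
      assert (0 < / hh) by (apply Rinv_0_lt_compat; auto). nra. }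
    apply Rabs_def2 in Hd'. lra.
Qed.

Lemma rolle f f' a b : a < b -> (forall c, a <= c <= b -> derivable_pt_lim f c (f' c)) -> f a = f b ->
  exists c, a < c < b /\ f' c = 0.
Proof.
  intros Hab Hd He. destruct (MVT_cor2 f f' a b Hab Hd) as [c [Hc1 Hc2]].
  exists c. split; auto. rewrite He, Rminus_diag in Hc1.
  symmetry in Hc1. apply Rmult_integral in Hc1. destruct Hc1; auto. lra.
Qed.

Lemma no3 c0 A B C z1 z2 z3 : 0 < z1 -> z1 < z2 -> z2 < z3 -> z3 < 1 ->
  (forall t, 0 < t < 1 -> 0 <= hfun c0 A B C t) ->
  hfun c0 A B C z1 = 0 -> hfun c0 A B C z2 = 0 -> hfun c0 A B C z3 = 0 -> False.
Proof.
  intros H1 H12 H23 H3 Hpos E1 E2 E3.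
  assert (Hmin : forall z, 0 < z < 1 -> hfun c0 A B C z = 0 -> forall x, 0 < x < 1 -> hfun c0 A B C z <= hfun c0 A B C x).
  { intros z Hz Ez x Hx. rewrite Ez. apply Hpos; auto. }
  assert (F1 : hder A B C z1 = 0) by (apply (fermat (hfun c0 A B C) z1); [lra|apply Hmin; auto; lra|apply hfun_der; lra]).
  assert (F2 : hder A B C z2 = 0) by (apply (fermat (hfun c0 A B C) z2); [lra|apply Hmin; auto; lra|apply hfun_der; lra]).
  destruct (rolle (hfun c0 A B C) (hder A B C) z1 z2 H12 ltac:(intros; apply hfun_der; lra) ltac:(lra)) as [u1 [Hu1 U1]].
  destruct (rolle (hfun c0 A B C) (hder A B C) z2 z3 H23 ltac:(intros; apply hfun_der; lra) ltac:(lra)) as [u2 [Hu2 U2]].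
  destruct (rolle (hder A B C) (hder2 A B C) z1 u1 ltac:(lra) ltac:(intros; apply hder_der; lra) ltac:(lra)) as [v1 [Hv1 V1]].
  destruct (rolle (hder A B C) (hder2 A B C) u1 z2 ltac:(lra) ltac:(intros; apply hder_der; lra) ltac:(lra)) as [v2 [Hv2 V2]].
  destruct (rolle (hder A B C) (hder2 A B C) z2 u2 ltac:(lra) ltac:(intros; apply hder_der; lra) ltac:(lra)) as [v3 [Hv3 V3]].
  set (k := 2 * B - 2 * A - 2 * C).
  assert (K : forall v, 0 < v < 1 -> hder2 A B C v = 0 -> k * (v * (1 - v)) = 1).
  { intros v Hv Ev. unfold hder2 in Ev. unfold k.
    assert (Ev' : (- / (1 - v) - / v - 2 * A + 2 * B - 2 * C) * (v * (1 - v)) = 0) by (rewrite Ev; ring).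
    replace ((- / (1 - v) - / v - 2 * A + 2 * B - 2 * C) * (v * (1 - v))) with
      (- 1 + (2 * B - 2 * A - 2 * C) * (v * (1 - v))) in Ev' by (field; lra). lra. }
  pose proof (K v1 ltac:(lra) V1) as K1. pose proof (K v2 ltac:(lra) V2) as K2. pose proof (K v3 ltac:(lra) V3) as K3.
  assert (M1 : k * ((v1 - v2) * (1 - v1 - v2)) = 0) by nra.
  assert (M2 : k * ((v1 - v3) * (1 - v1 - v3)) = 0) by nra.
  assert (Hk : k <> 0) by (intro Hk; rewrite Hk in K1; lra).
  assert (1 - v1 - v2 = 0).
  { apply Rmult_integral in M1. destruct M1 as [M|M]; [contradiction|]. apply Rmult_integral in M. destruct M; [lra|auto]. }
  assert (1 - v1 - v3 = 0).
  { apply Rmult_integral in M2. destruct M2 as [M|M]; [contradiction|]. apply Rmult_integral in M. destruct M; [lra|auto]. }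
  lra.
Qed.


Lemma I_spec nu : is_einf (fun e => exists d0 d1, unit_interval d0 /\ unit_interval d1 /\
                               e = integral nu (risk d0 d1)) (I nu).
Proof.
  apply einf_spec.
  - exists (integral nu (risk 0 0)), 0, 0. unfold unit_interval. repeat split; lra.
  - intros x [d0 [d1 [_ [_ ->]]]]. apply int_nonneg.
Qed.

Lemma I_le nu d0 d1 : 0 <= d0 <= 1 -> 0 <= d1 <= 1 -> ele (I nu) (integral nu (risk d0 d1)).
Proof. intros. apply (proj1 (I_spec nu)). exists d0, d1. auto. Qed.

Lemma I_ge nu u : (forall d0 d1, 0 <= d0 <= 1 -> 0 <= d1 <= 1 -> ele u (integral nu (risk d0 d1))) ->
  ele u (I nu).
Proof. intros H. apply (proj2 (I_spec nu)). intros x [d0 [d1 [H0 [H1 ->]]]]. apply H; auto. Qed.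

Lemma I_lower nu p q s : prior nu -> Ev nu (fun t => t) p -> Ev nu (fun t => t * t) q -> Ev nu S s ->
  ele (Fin (Gf p q - s)) (I nu).
Proof. intros. apply I_ge. intros. apply Jlow; auto. Qed.

Lemma mom_nonneg nu p q : prior nu -> Ev nu (fun t => t) p -> Ev nu (fun t => t * t) q ->
  0 <= q /\ 0 <= p - q /\ 0 <= 1 - 2 * p + q.
Proof.
  intros Hp Hid Hsq. split; [|split].
  - apply (Ev_mono nu (fun _ => 0) (fun t => t * t)) with (r := 0) (s := q); auto;
    [intros; nra| apply Ev_const; auto].
  - assert (Ev nu (fun t => t + (-1) * (t * t)) (p + (-1) * q)) by (apply Ev_plus; auto; apply Ev_scal; auto).
    assert (0 <= p + (-1) * q); [|lra].
    apply (Ev_mono nu (fun _ => 0) (fun t => t + (-1) * (t * t))); auto; [intros; nra| apply Ev_const; auto].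
  - assert (Ev nu (fun t => 1 + ((-2) * t + t * t)) (1 + ((-2) * p + q))) by
      (apply Ev_plus; [apply Ev_const; auto| apply Ev_plus; auto; apply Ev_scal; auto]).
    assert (0 <= 1 + ((-2) * p + q)); [|lra].
    apply (Ev_mono nu (fun _ => 0) (fun t => 1 + ((-2) * t + t * t))); auto; [intros; nra| apply Ev_const; auto].
Qed.

Definition T4 (t1 t2 t3 t4 : R) : R -> Prop := fun x => x = t1 \/ x = t2 \/ x = t3 \/ x = t4.

Lemma borel_T4 t1 t2 t3 t4 : borel (T4 t1 t2 t3 t4).
Proof.
  unfold T4. apply borel_union; [apply borel_pt|]. apply borel_union; [apply borel_pt|].
  apply borel_union; apply borel_pt.
Qed.

Lemma finish mu g t1 t2 t3 t4 : prior mu -> UC g -> (forall x, 0 <= x <= 1 -> 0 <= g x) -> Ev mu g 0 ->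
  (forall x, 0 <= x <= 1 -> g x = 0 -> T4 t1 t2 t3 t4 x) -> mu (T4 t1 t2 t3 t4) = 1.
Proof.
  intros Hp Hu Hg He HT.
  pose proof (null_lemma mu g Hp Hu Hg He) as H0.
  assert (HVb : borel (fun x => 0 <= x <= 1 /\ 0 < g x)).
  { apply borel_relopen. intros x Hx Hgx. destruct (Hu (g x) Hgx) as [d [Hd Hd']].
    exists d; split; auto. intros y Hy Hyx. specialize (Hd' y x Hy Hx Hyx). apply Rabs_def2 in Hd'. lra. }
  pose proof Hp as [_ [_ [Hu1 _]]].
  pose proof (mu_le1 mu _ Hp (borel_T4 t1 t2 t3 t4)).
  pose proof (mu_subadd mu _ _ Hp (borel_T4 t1 t2 t3 t4) HVb).
  assert (mu unit_interval <= mu (fun x => T4 t1 t2 t3 t4 x \/ (0 <= x <= 1 /\ 0 < g x))).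
  { apply mu_mono; auto. apply borel_unit. apply borel_union; auto. apply borel_T4.
    intros x Hx. destruct (Req_dec (g x) 0) as [E|E]; [left; apply HT; auto|right; split; auto].
    pose proof (Hg x Hx). lra. }
  lra.
Qed.

Lemma limit_le (phi : R -> R) c : continuity_pt phi 0 -> (forall e, 0 < e < 1 -> phi e <= c) -> phi 0 <= c.
Proof.
  intros Hc H. apply Rnot_lt_le. intro Hlt.
  destruct (cont_to_eps phi 0 Hc (phi 0 - c) ltac:(lra)) as [d [Hd Hd']].
  set (e := Rmin (d / 2) (1 / 2)).
  assert (e <= d/2) by apply Rmin_l. assert (e <= 1/2) by apply Rmin_r.
  assert (0 < e) by (apply Rmin_pos; lra).
  specialize (Hd' e ltac:(rewrite Rminus_0_r, Rabs_pos_eq; lra)). specialize (H e ltac:(lra)).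
  apply Rabs_def2 in Hd'. lra.
Qed.


Definition cA (P Q : R) := ln (1 / (Q / P)).
Definition cB1 (P Q : R) := ln (1 / ((P - Q) / P)).
Definition cA0 (P Q : R) := ln (1 / ((P - Q) / (1 - P))).
Definition cB0 (P Q : R) := ln (1 / ((1 - 2 * P + Q) / (1 - P))).
Definition Rst (P Q : R) := Rfun (cA P Q) (cB1 P Q) (cA0 P Q) (cB0 P Q).

Definition interior (P Q : R) := 0 < Q /\ 0 < P - Q /\ 0 < 1 - 2 * P + Q.

Lemma coeff_lb P Q p q : interior P Q -> 0 <= q -> 0 <= p - q -> 0 <= 1 - 2 * p + q ->
  q * cA P Q + (p - q) * (cB1 P Q + cA0 P Q) + (1 - 2 * p + q) * cB0 P Q >= Gf p q.
Proof.
  intros [H1 [H2 H3]] Hq Hpq Hr. unfold cA, cB1, cA0, cB0.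
  assert (0 < P) by lra. assert (0 < 1 - P) by lra.
  pose proof (mom_lb p q (Q / P) ((P - Q) / P) ((P - Q) / (1 - P)) ((1 - 2 * P + Q) / (1 - P)) 0
    Hq Hpq Hr) as M.
  assert (E1 : Q / P + (P - Q) / P = 1) by (field; lra).
  assert (E2 : (P - Q) / (1 - P) + (1 - 2 * P + Q) / (1 - P) = 1) by (field; lra).
  assert (Gf p q - 0 = Gf p q) by ring.
  rewrite <- H4. apply M; try (apply Rdiv_lt_0_compat; lra); lra.
Qed.

Lemma Rst_nonneg P Q t : interior P Q -> 0 <= t <= 1 -> 0 <= Rst P Q t.
Proof.
  intros [H1 [H2 H3]] Ht. unfold Rst, cA, cB1, cA0, cB0.
  assert (0 < P) by lra. assert (0 < 1 - P) by lra.
  assert (E1 : Q / P + (P - Q) / P = 1) by (field; lra).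
  assert (E2 : (P - Q) / (1 - P) + (1 - 2 * P + Q) / (1 - P) = 1) by (field; lra).
  pose proof (Rfun_lb (Q / P) ((P - Q) / P) ((P - Q) / (1 - P)) ((1 - 2 * P + Q) / (1 - P)) 0 t).
  assert (- 0 = 0) by ring.
  apply Rge_le. rewrite <- H5. apply H4; try (apply Rdiv_lt_0_compat; lra); lra.
Qed.

Lemma risk_star P Q : interior P Q ->
  risk ((P - Q) / (1 - P)) (Q / P) = fun t => Fin (Rst P Q t).
Proof.
  intros [H1 [H2 H3]]. apply functional_extensionality; intro t.
  assert (0 < P) by lra. assert (0 < 1 - P) by lra.
  rewrite risk_fin.
  - unfold Rst, cA, cB1, cA0, cB0. f_equal.
    replace (1 - Q / P) with ((P - Q) / P) by (field; lra).
    replace (1 - (P - Q) / (1 - P)) with ((1 - 2 * P + Q) / (1 - P)) by (field; lra). auto.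
  - split; [apply Rdiv_lt_0_compat; lra|]. apply Rmult_lt_reg_r with (1 - P); auto.
    unfold Rdiv. rewrite Rmult_assoc, Rinv_l by lra. lra.
  - split; [apply Rdiv_lt_0_compat; lra|]. apply Rmult_lt_reg_r with P; auto.
    unfold Rdiv. rewrite Rmult_assoc, Rinv_l by lra. lra.
Qed.

Lemma Ev_Rst mu p q s : prior mu -> Ev mu (fun t => t) p -> Ev mu (fun t => t * t) q -> Ev mu S s ->
  interior p q -> Ev mu (Rst p q) (Gf p q - s).
Proof.
  intros Hp H1 H2 H3 Hi. pose proof (Ev_Rfun mu (cA p q) (cB1 p q) (cA0 p q) (cB0 p q) p q s Hp H1 H2 H3) as E.
  destruct Hi as [i1 [i2 i3]].
  rewrite <- (mom_eq p q i1 i2 i3). unfold Rst.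
  replace (q * ln (1 / (q / p)) + (p - q) * (ln (1 / ((p - q) / p)) + ln (1 / ((p - q) / (1 - p)))) +
      (1 - 2 * p + q) * ln (1 / ((1 - 2 * p + q) / (1 - p))) - s) with
    (- s + (q * cA p q + (p - q) * (cB1 p q + cA0 p q) + (1 - 2 * p + q) * cB0 p q))
    by (unfold cA, cB1, cA0, cB0; ring).
  exact E.
Qed.

Lemma I_star mu p q s : prior mu -> Ev mu (fun t => t) p -> Ev mu (fun t => t * t) q -> Ev mu S s ->
  interior p q -> I mu = Fin (Gf p q - s).
Proof.
  intros Hp H1 H2 H3 Hi. apply ele_antisym.
  - destruct Hi as [i1 [i2 i3]].
    eapply ele_trans; [apply (I_le mu ((p - q) / (1 - p)) (q / p))|].
    + split; [apply Rdiv_le_0_compat; lra|]. apply Rmult_le_reg_r with (1 - p); [lra|].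
      unfold Rdiv. rewrite Rmult_assoc, Rinv_l by lra. lra.
    + split; [apply Rdiv_le_0_compat; lra|]. apply Rmult_le_reg_r with p; [lra|].
      unfold Rdiv. rewrite Rmult_assoc, Rinv_l by lra. lra.
    + rewrite risk_star by (repeat split; auto).
      rewrite (int_eq mu (Rst p q) (Gf p q - s)); auto.
      * apply ele_refl.
      * intros; apply Rst_nonneg; auto; repeat split; auto.
      * apply UC_Rfun.
      * apply Ev_Rst; auto; repeat split; auto.
  - apply I_lower; auto.
Qed.


Lemma pert mu p q s t e : latent_information_prior mu ->
  Ev mu (fun t => t) p -> Ev mu (fun t => t * t) q -> Ev mu S s -> interior p q ->
  0 <= t <= 1 -> 0 < e < 1 ->
  Rst ((1 - e) * p + e * t) ((1 - e) * q + e * (t * t)) t <= Gf p q - s.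
Proof.
  intros [Hp Hmax] H1 H2 H3 Hi Ht He.
  set (nu := mix e mu (dirac t)).
  assert (Hnu : prior nu) by (apply mix_prior; [lra|auto|apply dirac_prior; auto]).
  set (Pe := (1 - e) * p + e * t). set (Qe := (1 - e) * q + e * (t * t)).
  set (Se := (1 - e) * s + e * S t).
  assert (E1 : Ev nu (fun t => t) Pe) by (apply Ev_mix; auto; apply (Ev_dirac t (fun t => t)); auto; apply UC_id).
  assert (E2 : Ev nu (fun t => t * t) Qe) by (apply Ev_mix; auto; apply (Ev_dirac t (fun t => t * t)); auto; apply UC_sq).
  assert (E3 : Ev nu S Se) by (apply Ev_mix; auto; apply (Ev_dirac t S); auto; apply UC_S).
  pose proof (I_lower nu Pe Qe Se Hnu E1 E2 E3) as L1.
  pose proof (Hmax nu Hnu) as L2.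
  rewrite (I_star mu p q s Hp H1 H2 H3 Hi) in L2.
  pose proof (ele_trans _ _ _ L1 L2) as L. simpl in L.
  destruct Hi as [i1 [i2 i3]].
  assert (Hie : interior Pe Qe).
  { unfold Pe, Qe. assert (0 < (1 - e) * q) by (apply Rmult_lt_0_compat; lra).
    assert (0 < (1 - e) * (p - q)) by (apply Rmult_lt_0_compat; lra).
    assert (0 < (1 - e) * (1 - 2 * p + q)) by (apply Rmult_lt_0_compat; lra).
    assert (0 <= e * (t * t)) by (apply Rmult_le_pos; nra).
    assert (0 <= e * (t * (1 - t))) by (apply Rmult_le_pos; nra).
    assert (0 <= e * ((1 - t) * (1 - t))) by (apply Rmult_le_pos; nra).
    repeat split; nra. }
  destruct Hie as [j1 [j2 j3]].
  rewrite <- (mom_eq Pe Qe j1 j2 j3) in L.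
  pose proof (coeff_lb Pe Qe p q ltac:(repeat split; auto) ltac:(lra) ltac:(lra) ltac:(lra)) as C.
  unfold cA, cB1, cA0, cB0 in C.
  unfold Rst, Rfun, Lq, cA, cB1, cA0, cB0.
  set (a := ln (1 / (Qe / Pe))) in *. set (b1 := ln (1 / ((Pe - Qe) / Pe))) in *.
  set (a0 := ln (1 / ((Pe - Qe) / (1 - Pe)))) in *. set (b0 := ln (1 / ((1 - 2 * Pe + Qe) / (1 - Pe)))) in *.
  assert (Id : Qe * a + (Pe - Qe) * (b1 + a0) + (1 - 2 * Pe + Qe) * b0 =
    (1 - e) * (q * a + (p - q) * (b1 + a0) + (1 - 2 * p + q) * b0) +
    e * (t * t * a + t * (1 - t) * (b1 + a0) + (1 - t) * (1 - t) * b0)) by (unfold Pe, Qe; ring).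
  unfold Se in L.
  assert (e * (- S t + (t * t * a + t * (1 - t) * (b1 + a0) + (1 - t) * (1 - t) * b0)) <= e * (Gf p q - s)) by nra.
  apply Rmult_le_reg_l with e; lra.
Qed.

Lemma pert0 mu p q s t : latent_information_prior mu ->
  Ev mu (fun t => t) p -> Ev mu (fun t => t * t) q -> Ev mu S s -> interior p q ->
  0 <= t <= 1 -> Rst p q t <= Gf p q - s.
Proof.
  intros Hl H1 H2 H3 Hi Ht.
  set (phi := fun e => Rst ((1 - e) * p + e * t) ((1 - e) * q + e * (t * t)) t).
  assert (Hphi : phi 0 = Rst p q t).
  { unfold phi. f_equal; ring. }
  rewrite <- Hphi. apply limit_le.
  - apply derivable_continuous_pt. apply ex_derive_Reals_0.
    destruct Hi as [i1 [i2 i3]].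
    unfold phi, Rst, Rfun, Lq, cA, cB1, cA0, cB0. auto_derive.
    replace (1 + - 0) with 1 by ring. rewrite !Rmult_1_l, !Rmult_0_l, !Rplus_0_r.
    assert (0 < p) by lra. assert (0 < 1 - p) by lra.
    assert (A1 : 0 < q * / p) by (apply Rmult_lt_0_compat; [lra| apply Rinv_0_lt_compat; lra]).
    assert (A2 : 0 < (p + - q) * / p) by (apply Rmult_lt_0_compat; [lra| apply Rinv_0_lt_compat; lra]).
    assert (A3 : 0 < (p + - q) * / (1 + - p)) by (apply Rmult_lt_0_compat; [lra| apply Rinv_0_lt_compat; lra]).
    assert (A4 : 0 < (1 + - (2 * p) + q) * / (1 + - p)) by (apply Rmult_lt_0_compat; [lra| apply Rinv_0_lt_compat; lra]).
    repeat apply conj; try exact Logic.I;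
      first [ apply Rinv_0_lt_compat; assumption | apply Rgt_not_eq; (assumption || lra) ].
  - intros e He. unfold phi. apply (pert mu p q s t e); auto.
Qed.


Lemma h_hfun c p q x : 0 < x < 1 ->
  c + (-1) * Rst p q x = hfun c (cA p q) (cB1 p q + cA0 p q) (cB0 p q) x.
Proof.
  intro Hx. unfold Rst, Rfun, Lq, hfun, S. rewrite !xlogx_pos by lra. ring.
Qed.

Lemma three_zero (f : R -> R) : (forall z1 z2 z3, 0 < z1 -> z1 < z2 -> z2 < z3 -> z3 < 1 ->
    f z1 = 0 -> f z2 = 0 -> f z3 = 0 -> False) ->
  forall a b c, 0 < a < 1 -> 0 < b < 1 -> 0 < c < 1 -> f a = 0 -> f b = 0 -> f c = 0 ->
    a <> b -> a <> c -> b <> c -> False.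
Proof.
  intros H a b c Ha Hb Hc Fa Fb Fc Hab Hac Hbc.
  destruct (Rtotal_order a b) as [ab|[ab|ab]]; [|contradiction|];
  (destruct (Rtotal_order b c) as [bc|[bc|bc]]; [|contradiction|]);
  (destruct (Rtotal_order a c) as [ac|[ac|ac]]; [|contradiction|]);
  first [ solve [apply (H a b c); auto; lra] | solve [apply (H a c b); auto; lra]
        | solve [apply (H b a c); auto; lra] | solve [apply (H b c a); auto; lra]
        | solve [apply (H c a b); auto; lra] | solve [apply (H c b a); auto; lra] | lra ].
Qed.

Theorem lemma2 (mu : (R -> Prop) -> R) :
  latent_information_prior mu ->
  exists t1 t2 t3 t4 : R,
    mu (fun x => x = t1 \/ x = t2 \/ x = t3 \/ x = t4) = 1.
Proof.
  intros Hl. pose proof Hl as [Hp _].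
  destruct (Ev_exists mu (fun t => t) Hp UC_id) as [p H1].
  destruct (Ev_exists mu (fun t => t * t) Hp UC_sq) as [q H2].
  destruct (Ev_exists mu S Hp UC_S) as [s H3].
  destruct (mom_nonneg mu p q Hp H1 H2) as [Hq [Hpq Hr]].
  destruct (Req_dec q 0) as [Eq|Nq].
  { exists 0, 0, 0, 0. apply (finish mu (fun t => t * t)); auto.
    - apply UC_sq.
    - intros; nra.
    - rewrite <- Eq; auto.
    - intros x Hx E. left. nra. }
  destruct (Req_dec (p - q) 0) as [Epq|Npq].
  { exists 0, 1, 0, 1. apply (finish mu (fun t => t + (-1) * (t * t))); auto.
    - apply UC_plus; [apply UC_id| apply UC_scal, UC_sq].
    - intros; nra.
    - replace 0 with (p + (-1) * q) by lra. apply Ev_plus; auto. apply Ev_scal; auto.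
    - intros x Hx E. assert (x * (1 - x) = 0) by lra. apply Rmult_integral in H.
      unfold T4. destruct H; [left|right; left]; lra. }
  destruct (Req_dec (1 - 2 * p + q) 0) as [Er|Nr].
  { exists 1, 1, 1, 1. apply (finish mu (fun t => 1 + ((-2) * t + t * t))); auto.
    - apply UC_plus; [apply UC_const| apply UC_plus; [apply UC_scal, UC_id| apply UC_sq]].
    - intros; nra.
    - replace 0 with (1 + ((-2) * p + q)) by lra.
      apply Ev_plus; [apply Ev_const; auto| apply Ev_plus; auto; apply Ev_scal; auto].
    - intros x Hx E. left. nra. }
  assert (Hi : interior p q) by (repeat split; lra).
  set (Ival := Gf p q - s).
  set (h := fun t => Ival + (-1) * Rst p q t).
  assert (Hh0 : forall x, 0 <= x <= 1 -> 0 <= h x).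
  { intros x Hx. unfold h. pose proof (pert0 mu p q s x Hl H1 H2 H3 Hi Hx). fold Ival in H. lra. }
  assert (HhU : UC h) by (apply UC_plus; [apply UC_const| apply UC_scal, UC_Rfun]).
  assert (HhE : Ev mu h 0).
  { replace 0 with (Ival + (-1) * Ival) by ring. apply Ev_plus; [apply Ev_const; auto|].
    apply Ev_scal. apply Ev_Rst; auto. }
  set (hf := hfun Ival (cA p q) (cB1 p q + cA0 p q) (cB0 p q)).
  assert (Hhf : forall x, 0 < x < 1 -> h x = hf x) by (intros; apply h_hfun; auto).
  assert (N3 : forall a b c, 0 < a < 1 -> 0 < b < 1 -> 0 < c < 1 -> h a = 0 -> h b = 0 -> h c = 0 ->
    a <> b -> a <> c -> b <> c -> False).
  { intros a b c Ha Hb Hc Fa Fb Fc. rewrite Hhf in Fa, Fb, Fc by auto.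
    apply (three_zero hf); auto.
    intros z1 z2 z3 Z1 Z12 Z23 Z3. apply no3; auto.
    intros t Ht. unfold hf. rewrite <- Hhf by auto. apply Hh0; lra. }
  set (Z := fun x => 0 < x < 1 /\ h x = 0).
  destruct (classic (exists a b, a <> b /\ Z a /\ Z b)) as [[a [b [Hab [Za Zb]]]]|Hno2].
  - exists 0, 1, a, b. apply (finish mu h); auto.
    intros x Hx E. unfold T4.
    destruct (Req_dec x 0); [left; auto|]. destruct (Req_dec x 1); [right; left; auto|].
    right; right. destruct (Req_dec x a); [left; auto|]. right.
    destruct (Req_dec x b); auto. exfalso.
    destruct Za, Zb. apply (N3 a b x); auto; try lra.
  - destruct (classic (exists a, Z a)) as [[a Za]|Hno1].
    + exists 0, 1, a, a. apply (finish mu h); auto.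
      intros x Hx E. unfold T4.
      destruct (Req_dec x 0); [left; auto|]. destruct (Req_dec x 1); [right; left; auto|].
      right; right; left. destruct (Req_dec x a); auto. exfalso. apply Hno2. exists x, a.
      split; auto. split; auto. split; [lra|auto].
    + exists 0, 1, 0, 1. apply (finish mu h); auto.
      intros x Hx E. unfold T4.
      destruct (Req_dec x 0); [left; auto|]. destruct (Req_dec x 1); [right; left; auto|].
      exfalso. apply Hno1. exists x. split; [lra|auto].
Qed.
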